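(* Let $\tau$ be a pure type and let $\rho$ be a valuation (assigning natural numbers to iteration variables). If $\varphi \in \mathcal{L}^+(\tau)$ (a positive formula with empty fixpoint context), then $[\![\varphi]\!]\rho$ is a Scott-open subset of $[\![\tau]\!]$. If $\varphi \in \mathcal{L}^-(\tau)$, then $[\![\varphi]\!]\rho$ is a compact-saturated subset of $[\![\tau]\!]$. In particular, if $\varphi \in \mathcal{L}^\pm(\tau)$, then $[\![\varphi]\!]\rho$ is a compact Scott-open subset of $[\![\tau]\!]$.
   Context: Pure types: closed types of $\tau ::= \mathbf{1} \mid \tau\times\tau \mid \tau\to\tau \mid \tau+\tau \mid \alpha \mid \mu\alpha.\tau$, interpreted as Scott domains: $[\![\mathbf{1}]\!]=\{\bot\le\top\}$; products componentwise with projections $\pi_1,\pi_2$; $[\![\tau\to\sigma]\!]$ = Scott-continuous functions with pointwise order; $[\![\tau_1+\tau_2]\!]$ = disjoint union with a new bottom, with injections $\mathrm{inj}_i$; $[\![\mu\alpha.\tau]\!]$ = canonical bilimit solution with inverse isomorphisms $\mathrm{fold}:[\![\tau[\mu\alpha.\tau/\alpha]]\!]\to[\![\mu\alpha.\tau]\!]$, $\mathrm{unfold}$. Topology: Scott topology; saturated = upward closed. Iteration terms: $t ::= i \mid 0 \mid t+1$ ($i$ iteration variables). Fixpoint contexts $\Theta = X_1:\sigma_1,\dots,X_n:\sigma_n$ (distinct fixpoint variables). For $s\in\{\pm,+,-\}$, the sets $\mathcal{L}^s(\Theta;\tau)$ are generated by: $\mathrm{True},\mathrm{False}\in\mathcal{L}^s(\Theta;\tau)$;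 closure under $\wedge,\vee$; $\langle()\rangle\in\mathcal{L}^s(\Theta;\mathbf{1})$; $\langle\pi_i\rangle\varphi\in\mathcal{L}^s(\Theta;\tau_1\times\tau_2)$ if $\varphi\in\mathcal{L}^s(\Theta;\tau_i)$; $\langle\mathrm{inj}_i\rangle\varphi\in\mathcal{L}^s(\Theta;\tau_1+\tau_2)$ if $\varphi\in\mathcal{L}^s(\Theta;\tau_i)$; $\langle\mathrm{fold}\rangle\varphi\in\mathcal{L}^s(\Theta;\mu\alpha.\tau)$ if $\varphi\in\mathcal{L}^s(\Theta;\tau[\mu\alpha.\tau/\alpha])$; $X\in\mathcal{L}^s(\Theta;\tau)$ if $(X:\tau)\in\Theta$; weakening of $\Theta$ by a fresh variable; $(\mu^t X)\varphi,(\nu^t X)\varphi\in\mathcal{L}^s(\Theta;\tau)$ if $\varphi\in\mathcal{L}^s(\Theta,X:\tau;\tau)$; $(\exists i)\varphi\in\mathcal{L}^+(\Theta;\tau)$ if $\varphi\in\mathcal{L}^+(\Theta;\tau)$ and $i \mathrel{\mathrm{Pos}} \varphi$; $(\forall i)\varphi\in\mathcal{L}^-(\Theta;\tau)$ if $\varphi\in\mathcal{L}^-(\Theta;\tau)$ and $i\mathrel{\mathrm{Neg}}\varphi$; $\psi\Rightarrow\varphi\in\mathcal{L}^s(\,;\sigma\to\tau)$ if $\psi\in\mathcal{L}^{-s}(\,;\sigma)$ and $\varphi\in\mathcal{L}^s(\,;\tau)$ (empty fixpoint context), where $-\pm=\pm$, $-+=-$, $--=+$. The predicates are defined inductively: $i\mathrel{\mathrm{Pos}}\varphi$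 and $i\mathrel{\mathrm{Neg}}\varphi$ hold if $i$ is not free in $\varphi$; both are preserved by $\wedge,\vee$ and by the modalities $\langle\pi_j\rangle,\langle\mathrm{inj}_j\rangle,\langle\mathrm{fold}\rangle$; $i\mathrel{\mathrm{Pos}}(\psi\Rightarrow\varphi)$ if $i\mathrel{\mathrm{Neg}}\psi$ and $i\mathrel{\mathrm{Pos}}\varphi$; $i\mathrel{\mathrm{Neg}}(\psi\Rightarrow\varphi)$ if $i\mathrel{\mathrm{Pos}}\psi$ and $i\mathrel{\mathrm{Neg}}\varphi$; $i\mathrel{\mathrm{Pos}}(\exists j)\varphi$ if $i\mathrel{\mathrm{Pos}}\varphi$; $i\mathrel{\mathrm{Neg}}(\forall j)\varphi$ if $i\mathrel{\mathrm{Neg}}\varphi$; $i\mathrel{\mathrm{Pos}}(\mu^tX)\varphi$ if $i\mathrel{\mathrm{Pos}}\varphi$; $i\mathrel{\mathrm{Pos}}(\nu^tX)\varphi$ if $i\mathrel{\mathrm{Pos}}\varphi$ and $i$ not free in $t$; $i\mathrel{\mathrm{Neg}}(\nu^tX)\varphi$ if $i\mathrel{\mathrm{Neg}}\varphi$; $i\mathrel{\mathrm{Neg}}(\mu^tX)\varphi$ if $i\mathrel{\mathrm{Neg}}\varphi$ and $i$ not free in $t$. Write $\mathcal{L}^s(\tau)$ for $\mathcal{L}^s(\,;\tau)$. Semantics: a valuation $\rho$ of $\Theta$ maps each $(X:\sigma)\in\Theta$ to a subset $\rho(X)\subseteq[\![\sigma]\!]$ and each iteration variable to a natural number (so $[\![t]\!]\rho\in\mathbb{N}$).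 Then $[\![\mathrm{True}]\!]\rho=[\![\tau]\!]$, $[\![\mathrm{False}]\!]\rho=\emptyset$, $\wedge,\vee$ are $\cap,\cup$, $[\![X]\!]\rho=\rho(X)$, $[\![\langle()\rangle]\!]\rho=\{\top\}$, $[\![\langle\pi_i\rangle\varphi]\!]\rho=\{x\mid \pi_i(x)\in[\![\varphi]\!]\rho\}$, $[\![\langle\mathrm{inj}_i\rangle\varphi]\!]\rho=\{\mathrm{inj}_i(x)\mid x\in[\![\varphi]\!]\rho\}$, $[\![\langle\mathrm{fold}\rangle\varphi]\!]\rho=\{x\mid\mathrm{unfold}(x)\in[\![\varphi]\!]\rho\}$, $[\![\psi\Rightarrow\varphi]\!]\rho=\{f\mid\forall x\in[\![\psi]\!]\rho,\ f(x)\in[\![\varphi]\!]\rho\}$, $[\![(\exists i)\varphi]\!]\rho=\bigcup_{n}[\![\varphi]\!]\rho[n/i]$, $[\![(\forall i)\varphi]\!]\rho=\bigcap_{n}[\![\varphi]\!]\rho[n/i]$, and with $F(S)=[\![\varphi]\!]\rho[S/X]$ and $n=[\![t]\!]\rho$: $[\![(\mu^tX)\varphi]\!]\rho=F^n(\emptyset)$, $[\![(\nu^tX)\varphi]\!]\rho=F^n([\![\tau]\!])$. *)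

(* Defs.v *)
From Stdlib Require Import List Arith PeanoNat ClassicalEpsilon.
Import ListNotations.

(* Types  tau ::= 1 | tau x tau | tau -> tau | tau + tau | alpha | mu alpha.tau
   (type variables in de Bruijn notation).                              *)
Inductive ty : Type :=
| TOne : ty
| TProd : ty -> ty -> ty
| TArr : ty -> ty -> ty
| TSum : ty -> ty -> ty
| TVar : nat -> ty
| TMu : ty -> ty.

Definition ty_eq_dec : forall a b : ty, {a = b} + {a <> b}.
Proof. decide equality; apply Nat.eq_dec. Defined.

(* substitution of a CLOSED type s for variable k (no shifting needed) *)
Fixpoint tsubst (k : nat) (s : ty) (t : ty) : ty :=
  match t with
  | TOne => TOne
  | TProd a b => TProd (tsubst k s a) (tsubst k s b)
  | TArr a b => TArr (tsubst k s a) (tsubst k s b)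
  | TSum a b => TSum (tsubst k s a) (tsubst k s b)
  | TVar n => if Nat.eqb n k then s else if Nat.ltb k n then TVar (n - 1) else TVar n
  | TMu a => TMu (tsubst (S k) s a)
  end.

Definition unfold_ty (t : ty) : ty := tsubst 0 (TMu t) t.

Fixpoint closed_at (k : nat) (t : ty) : Prop :=
  match t with
  | TOne => True
  | TProd a b | TArr a b | TSum a b => closed_at k a /\ closed_at k b
  | TVar n => n < k
  | TMu a => closed_at (S k) a
  end.

Definition pure_type (t : ty) : Prop := closed_at 0 t.

Inductive rtok : Type :=
| RU : rtok                              (* the top token of 1 *)
| RFst : rtok -> rtok
| RSnd : rtok -> rtok
| RInl : option rtok -> rtok             (* None: "is a left injection" *)
| RInr : option rtok -> rtok
| RFun : list rtok -> rtok -> rtok       (* (X, b) : step-function token *)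
| RFold : rtok -> rtok.

Fixpoint depth (t : rtok) : nat :=
  match t with
  | RU => 1
  | RFst u | RSnd u | RFold u => S (depth u)
  | RInl None | RInr None => 1
  | RInl (Some u) | RInr (Some u) => S (depth u)
  | RFun Y c =>
      S (Nat.max (depth c)
           ((fix dl (l : list rtok) : nat :=
               match l with [] => 0 | u :: l => Nat.max (depth u) (dl l) end) Y))
  end.

Definition depthL (l : list rtok) : nat := fold_right (fun u m => Nat.max (depth u) m) 0 l.

Inductive wt : ty -> rtok -> Prop :=
| wt_unit : wt TOne RU
| wt_fst a b u : wt a u -> wt (TProd a b) (RFst u)
| wt_snd a b u : wt b u -> wt (TProd a b) (RSnd u)
| wt_inl a b o : (forall u, o = Some u -> wt a u) -> wt (TSum a b) (RInl o)
| wt_inr a b o : (forall u, o = Some u -> wt b u) -> wt (TSum a b) (RInr o)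
| wt_fun a b Y c : (forall y, In y Y -> wt a y) -> wt b c -> wt (TArr a b) (RFun Y c)
| wt_fold s u : wt (unfold_ty s) u -> wt (TMu s) (RFold u).

Definition fsts := flat_map (fun t => match t with RFst u => [u] | _ => [] end).
Definition snds := flat_map (fun t => match t with RSnd u => [u] | _ => [] end).
Definition inls := flat_map (fun t => match t with RInl (Some u) => [u] | _ => [] end).
Definition inrs := flat_map (fun t => match t with RInr (Some u) => [u] | _ => [] end).
Definition folds := flat_map (fun t => match t with RFold u => [u] | _ => [] end).
Definition fargs := flat_map (fun t => match t with RFun Y _ => Y | _ => [] end).
Definition fress := flat_map (fun t => match t with RFun _ c => [c] | _ => [] end).
Definition isInl (t : rtok) : Prop := match t with RInl _ => True | _ => False end.
Definition isInr (t : rtok) : Prop := match t with RInr _ => True | _ => False end.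

(* consistency predicate (fuel = bound on token depth) *)
Fixpoint con_f (n : nat) (τ : ty) (X : list rtok) {struct n} : Prop :=
  match X with
  | [] => True
  | _ :: _ =>
    match n with
    | 0 => False
    | S n =>
      match τ with
      | TOne => True
      | TProd a b => con_f n a (fsts X) /\ con_f n b (snds X)
      | TSum a b => (Forall isInl X /\ con_f n a (inls X))
                    \/ (Forall isInr X /\ con_f n b (inrs X))
      | TArr a b =>
          (forall t, In t X -> match t with RFun Y _ => con_f n a Y | _ => False end)
          /\ (forall I, incl I X -> con_f n a (fargs I) -> con_f n b (fress I))
      | TMu s => con_f n (unfold_ty s) (folds X)
      | TVar _ => False
      end
    end
  end.

Fixpoint ent_f (n : nat) (τ : ty) (X : list rtok) (t : rtok) {struct n} : Prop :=
  match n with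
  | 0 => False
  | S n =>
    match τ, t with
    | TOne, RU => X <> []
    | TProd a b, RFst u => ent_f n a (fsts X) u
    | TProd a b, RSnd u => ent_f n b (snds X) u
    | TSum a b, RInl o => (exists v, In (RInl v) X) /\
        match o with None => True | Some u => ent_f n a (inls X) u end
    | TSum a b, RInr o => (exists v, In (RInr v) X) /\
        match o with None => True | Some u => ent_f n b (inrs X) u end
    | TArr a b, RFun Y c =>
        ent_f n b
          (flat_map (fun s => match s with
                        | RFun Z d =>
                            if excluded_middle_informative (forall z, In z Z -> ent_f n a Y z)
                            then [d] else []
                        | _ => [] end) X) c
    | TMu s, RFold u => ent_f n (unfold_ty s) (folds X) u
    | _, _ => False
    end
  end.

Definition Con (τ : ty) (X : list rtok) : Prop :=
  (forall t, In t X -> wt τ t) /\ con_f (S (depthL X)) τ X.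

Definition Ent (τ : ty) (X : list rtok) (t : rtok) : Prop :=
  ent_f (S (Nat.max (depth t) (depthL X))) τ X t.

(* ideal elements = points of the Scott domain [[tau]] *)
Definition is_ideal (τ : ty) (x : rtok -> Prop) : Prop :=
  (forall X, (forall t, In t X -> x t) -> Con τ X) /\
  (forall X t, (forall u, In u X -> x u) -> Con τ [t] -> Ent τ X t -> x t).

Definition elem (τ : ty) : Type := { x : rtok -> Prop | is_ideal τ x }.
Definition carrier {τ} (x : elem τ) : rtok -> Prop := proj1_sig x.

Definition dle {τ} (x y : elem τ) : Prop := forall t, carrier x t -> carrier y t.

(* application of a continuous function (ideal of A -> B) to a point *)
Definition app (f x : rtok -> Prop) : rtok -> Prop :=
  fun c => exists Y, (forall u, In u Y -> x u) /\ f (RFun Y c).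

Definition injL (x : rtok -> Prop) : rtok -> Prop :=
  fun t => match t with RInl None => True | RInl (Some u) => x u | _ => False end.
Definition injR (x : rtok -> Prop) : rtok -> Prop :=
  fun t => match t with RInr None => True | RInr (Some u) => x u | _ => False end.

Definition directed {τ} (D : elem τ -> Prop) : Prop :=
  (exists d, D d) /\
  (forall d1 d2, D d1 -> D d2 -> exists d3, D d3 /\ dle d1 d3 /\ dle d2 d3).

Definition is_lub {τ} (D : elem τ -> Prop) (s : elem τ) : Prop :=
  (forall d, D d -> dle d s) /\ (forall u, (forall d, D d -> dle d u) -> dle s u).

Definition upper {τ} (U : elem τ -> Prop) : Prop :=
  forall x y, dle x y -> U x -> U y.

Definition scott_open {τ} (U : elem τ -> Prop) : Prop :=
  upper U /\
  (forall D s, directed D -> is_lub D s -> U s -> exists d, D d /\ U d).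

Definition saturated {τ} (K : elem τ -> Prop) : Prop := upper K.

Definition compact {τ} (K : elem τ -> Prop) : Prop :=
  forall (I : Type) (O : I -> elem τ -> Prop),
    (forall k, scott_open (O k)) ->
    (forall x, K x -> exists k, O k x) ->
    exists l : list I, forall x, K x -> exists k, In k l /\ O k x.

Inductive iterm : Type := IVar : nat -> iterm | IZero : iterm | ISucc : iterm -> iterm.

Inductive form : Type :=
| FTrue | FFalse
| FAnd : form -> form -> form
| FOr : form -> form -> form
| FUnit : form
| FPi : bool -> form -> form            (* <pi_1> (true), <pi_2> (false) *)
| FInj : bool -> form -> form           (* <inj_1> (true), <inj_2> (false) *)
| FFold : form -> form
| FVar : nat -> form
| FMu : iterm -> nat -> form -> form
| FNu : iterm -> nat -> form -> form
| FEx : nat -> form -> form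
| FAll : nat -> form -> form
| FImp : form -> form -> form.

Fixpoint fvt (i : nat) (t : iterm) : Prop :=
  match t with IVar j => j = i | IZero => False | ISucc t => fvt i t end.

Fixpoint fvi (i : nat) (φ : form) : Prop :=
  match φ with
  | FTrue | FFalse | FUnit | FVar _ => False
  | FAnd a b | FOr a b | FImp a b => fvi i a \/ fvi i b
  | FPi _ a | FInj _ a | FFold a => fvi i a
  | FMu t _ a | FNu t _ a => fvt i t \/ fvi i a
  | FEx j a | FAll j a => j <> i /\ fvi i a
  end.

Inductive Pos : nat -> form -> Prop :=
| Pos_nf i φ : ~ fvi i φ -> Pos i φ
| Pos_and i a b : Pos i a -> Pos i b -> Pos i (FAnd a b)
| Pos_or i a b : Pos i a -> Pos i b -> Pos i (FOr a b)
| Pos_pi i c a : Pos i a -> Pos i (FPi c a)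
| Pos_inj i c a : Pos i a -> Pos i (FInj c a)
| Pos_fold i a : Pos i a -> Pos i (FFold a)
| Pos_imp i a b : Neg i a -> Pos i b -> Pos i (FImp a b)
| Pos_ex i j a : Pos i a -> Pos i (FEx j a)
| Pos_mu i t X a : Pos i a -> Pos i (FMu t X a)
| Pos_nu i t X a : Pos i a -> ~ fvt i t -> Pos i (FNu t X a)
with Neg : nat -> form -> Prop :=
| Neg_nf i φ : ~ fvi i φ -> Neg i φ
| Neg_and i a b : Neg i a -> Neg i b -> Neg i (FAnd a b)
| Neg_or i a b : Neg i a -> Neg i b -> Neg i (FOr a b)
| Neg_pi i c a : Neg i a -> Neg i (FPi c a)
| Neg_inj i c a : Neg i a -> Neg i (FInj c a)
| Neg_fold i a : Neg i a -> Neg i (FFold a)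
| Neg_imp i a b : Pos i a -> Neg i b -> Neg i (FImp a b)
| Neg_all i j a : Neg i a -> Neg i (FAll j a)
| Neg_nu i t X a : Neg i a -> Neg i (FNu t X a)
| Neg_mu i t X a : Neg i a -> ~ fvt i t -> Neg i (FMu t X a).

Inductive sign : Type := SPM | SPlus | SMinus.   (* ±, +, - *)
Definition negs (s : sign) : sign :=
  match s with SPM => SPM | SPlus => SMinus | SMinus => SPlus end.

Definition fctx := list (nat * ty).

(* wf s Θ τ φ  <->  φ ∈ L^s(Θ; τ) *)
Inductive wf : sign -> fctx -> ty -> form -> Prop :=
| wf_true s Θ τ : wf s Θ τ FTrue
| wf_false s Θ τ : wf s Θ τ FFalse
| wf_and s Θ τ a b : wf s Θ τ a -> wf s Θ τ b -> wf s Θ τ (FAnd a b)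
| wf_or s Θ τ a b : wf s Θ τ a -> wf s Θ τ b -> wf s Θ τ (FOr a b)
| wf_unit s Θ : wf s Θ TOne FUnit
| wf_pi1 s Θ t1 t2 a : wf s Θ t1 a -> wf s Θ (TProd t1 t2) (FPi true a)
| wf_pi2 s Θ t1 t2 a : wf s Θ t2 a -> wf s Θ (TProd t1 t2) (FPi false a)
| wf_inj1 s Θ t1 t2 a : wf s Θ t1 a -> wf s Θ (TSum t1 t2) (FInj true a)
| wf_inj2 s Θ t1 t2 a : wf s Θ t2 a -> wf s Θ (TSum t1 t2) (FInj false a)
| wf_fold s Θ t a : wf s Θ (unfold_ty t) a -> wf s Θ (TMu t) (FFold a)
| wf_var s Θ X τ : In (X, τ) Θ -> wf s Θ τ (FVar X)
| wf_weak s Θ τ a Y σ : wf s Θ τ a -> ~ In Y (map fst Θ) -> wf s (Θ ++ [(Y, σ)]) τ a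
| wf_mu s Θ τ t X a : ~ In X (map fst Θ) -> wf s (Θ ++ [(X, τ)]) τ a -> wf s Θ τ (FMu t X a)
| wf_nu s Θ τ t X a : ~ In X (map fst Θ) -> wf s (Θ ++ [(X, τ)]) τ a -> wf s Θ τ (FNu t X a)
| wf_ex Θ τ i a : wf SPlus Θ τ a -> Pos i a -> wf SPlus Θ τ (FEx i a)
| wf_all Θ τ i a : wf SMinus Θ τ a -> Neg i a -> wf SMinus Θ τ (FAll i a)
| wf_imp s σ τ a b : wf (negs s) [] σ a -> wf s [] τ b -> wf s [] (TArr σ τ) (FImp a b).

Definition fixval : Type := nat -> forall σ : ty, elem σ -> Prop.
Definition fixval0 : fixval := fun _ _ _ => False.

Definition upd (ρ : fixval) (X : nat) (τ : ty) (S : elem τ -> Prop) : fixval :=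
  fun Y σ =>
    if Nat.eqb Y X then
      match ty_eq_dec τ σ with
      | left e => eq_rect τ (fun σ => elem σ -> Prop) S σ e
      | right _ => ρ Y σ
      end
    else ρ Y σ.

Definition iupd (ρ : nat -> nat) (i m : nat) : nat -> nat :=
  fun j => if Nat.eqb j i then m else ρ j.

Fixpoint ieval (ρ : nat -> nat) (t : iterm) : nat :=
  match t with IVar i => ρ i | IZero => 0 | ISucc t => S (ieval ρ t) end.

Fixpoint sem (φ : form) (τ : ty) (ρX : fixval) (ρi : nat -> nat) {struct φ} : elem τ -> Prop :=
  match φ with
  | FTrue => fun _ => True
  | FFalse => fun _ => False
  | FAnd a b => fun x => sem a τ ρX ρi x /\ sem b τ ρX ρi x
  | FOr a b => fun x => sem a τ ρX ρi x \/ sem b τ ρX ρi x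
  | FUnit => match τ as τ0 return elem τ0 -> Prop with
             | TOne => fun x => carrier x RU        (* x = top *)
             | _ => fun _ => False end
  | FPi c a => match τ as τ0 return elem τ0 -> Prop with
             | TProd t1 t2 => fun x =>
                 exists y : elem (if c then t1 else t2),
                   (forall u, carrier y u <-> carrier x (if c then RFst u else RSnd u))
                   /\ sem a _ ρX ρi y
             | _ => fun _ => False end
  | FInj c a => match τ as τ0 return elem τ0 -> Prop with
             | TSum t1 t2 => fun x =>
                 exists y : elem (if c then t1 else t2),
                   sem a _ ρX ρi y /\
                   (forall u, carrier x u <-> (if c then injL else injR) (carrier y) u)
             | _ => fun _ => False end
  | FFold a => match τ as τ0 return elem τ0 -> Prop with
             | TMu s => fun x =>
                 exists y : elem (unfold_ty s),
                   (forall u, carrier y u <-> carrier x (RFold u))   (* y = unfold x *)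
                   /\ sem a _ ρX ρi y
             | _ => fun _ => False end
  | FVar X => ρX X τ
  | FMu t X a => Nat.iter (ieval ρi t) (fun S => sem a τ (upd ρX X τ S) ρi) (fun _ => False)
  | FNu t X a => Nat.iter (ieval ρi t) (fun S => sem a τ (upd ρX X τ S) ρi) (fun _ => True)
  | FEx i a => fun x => exists m, sem a τ ρX (iupd ρi i m) x
  | FAll i a => fun x => forall m, sem a τ ρX (iupd ρi i m) x
  | FImp a b => match τ as τ0 return elem τ0 -> Prop with
             | TArr t1 t2 => fun f =>
                 forall x : elem t1, sem a t1 ρX ρi x ->
                   exists y : elem t2,
                     (forall d, carrier y d <-> app (carrier f) (carrier x) d)  (* y = f x *)
                     /\ sem b t2 ρX ρi y
             | _ => fun _ => False end
  end.

(* Main.v *)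
Require Import Defs.
From Stdlib Require Import List Arith PeanoNat Lia Classical ClassicalEpsilon
  FunctionalExtensionality PropExtensionality ProofIrrelevance Eqdep_dec.
Import ListNotations.

Lemma depth_pos t : 1 <= depth t.
Proof. destruct t; simpl; try lia. all: destruct o; simpl; lia. Qed.

Lemma depth_fun Y c : depth (RFun Y c) = S (Nat.max (depth c) (depthL Y)).
Proof.
  reflexivity.
Qed.

Lemma depthL_lt_iff L n : depthL L < n <-> 0 < n /\ (forall u, In u L -> depth u < n).
Proof.
  induction L as [|a L IH]; simpl.
  - split; [intros; split; [lia| tauto] | intros [H _]; lia].
  - rewrite Nat.max_lub_lt_iff, IH. split.
    + intros [H1 [H2 H3]]. split; auto. intros u [<-|Hu]; auto.
    + intros [H1 H2]. auto.
Qed.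

Lemma depth_le_L u L : In u L -> depth u <= depthL L.
Proof.
  induction L; simpl; [tauto|]. intros [<-|H]; [lia|]. apply IHL in H. lia.
Qed.

Lemma depthL_le_iff L n : depthL L <= n <-> (forall u, In u L -> depth u <= n).
Proof.
  induction L as [|a L IH]; simpl.
  - split; intros; [tauto|lia].
  - rewrite Nat.max_lub_iff, IH. split.
    + intros [H1 H2] u [<-|Hu]; auto.
    + intros H. auto.
Qed.

Lemma in_fsts u X : In u (fsts X) <-> In (RFst u) X.
Proof.
  unfold fsts. rewrite in_flat_map. split.
  - intros [t [Ht Hu]]. destruct t; simpl in Hu; try tauto. destruct Hu as [<-|[]]; auto.
  - intros H. exists (RFst u). simpl; auto.
Qed.
Lemma in_snds u X : In u (snds X) <-> In (RSnd u) X.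
Proof.
  unfold snds. rewrite in_flat_map. split.
  - intros [t [Ht Hu]]. destruct t; simpl in Hu; try tauto. destruct Hu as [<-|[]]; auto.
  - intros H. exists (RSnd u). simpl; auto.
Qed.
Lemma in_folds u X : In u (folds X) <-> In (RFold u) X.
Proof.
  unfold folds. rewrite in_flat_map. split.
  - intros [t [Ht Hu]]. destruct t; simpl in Hu; try tauto. destruct Hu as [<-|[]]; auto.
  - intros H. exists (RFold u). simpl; auto.
Qed.
Lemma in_inls u X : In u (inls X) <-> In (RInl (Some u)) X.
Proof.
  unfold inls. rewrite in_flat_map. split.
  - intros [t [Ht Hu]]. destruct t; simpl in Hu; try tauto. destruct o; simpl in Hu; try tauto.
    destruct Hu as [<-|[]]; auto.
  - intros H. exists (RInl (Some u)). simpl; auto.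
Qed.
Lemma in_inrs u X : In u (inrs X) <-> In (RInr (Some u)) X.
Proof.
  unfold inrs. rewrite in_flat_map. split.
  - intros [t [Ht Hu]]. destruct t; simpl in Hu; try tauto. destruct o; simpl in Hu; try tauto.
    destruct Hu as [<-|[]]; auto.
  - intros H. exists (RInr (Some u)). simpl; auto.
Qed.
Lemma in_fress c X : In c (fress X) <-> exists Y, In (RFun Y c) X.
Proof.
  unfold fress. rewrite in_flat_map. split.
  - intros [t [Ht Hu]]. destruct t; simpl in Hu; try tauto. destruct Hu as [<-|[]]; eauto.
  - intros [Y H]. exists (RFun Y c). simpl; auto.
Qed.
Lemma in_fargs u X : In u (fargs X) <-> exists Y c, In (RFun Y c) X /\ In u Y.
Proof.
  unfold fargs. rewrite in_flat_map. split.
  - intros [t [Ht Hu]]. destruct t; simpl in Hu; try tauto. eauto.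
  - intros [Y [c [H1 H2]]]. exists (RFun Y c). simpl; auto.
Qed.

Ltac dtac := repeat match goal with
  | H : In _ (fsts _) |- _ => apply in_fsts in H
  | H : In _ (snds _) |- _ => apply in_snds in H
  | H : In _ (folds _) |- _ => apply in_folds in H
  | H : In _ (inls _) |- _ => apply in_inls in H
  | H : In _ (inrs _) |- _ => apply in_inrs in H
  | H : In _ (fress _) |- _ => apply in_fress in H; destruct H
  | H : In _ (fargs _) |- _ => apply in_fargs in H; destruct H as [? [? [? ?]]]
  end.

Lemma sub_lt (L X : list rtok) n :
  depthL X <= n -> (forall v, In v L -> exists u, In u X /\ depth v < depth u) -> depthL L < S n.
Proof.
  intros H1 H2. apply depthL_lt_iff. split; [lia|]. intros v Hv.
  destruct (H2 v Hv) as [u [Hu Hd]]. apply depth_le_L in Hu. lia.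
Qed.

Lemma sub_lt' (L X : list rtok) n :
  X <> [] -> depthL X <= n -> (forall v, In v L -> exists u, In u X /\ depth v < depth u) -> depthL L < n.
Proof.
  intros H0 H1 H2. destruct X as [|x X]; [congruence|].
  pose proof (depth_pos x). assert (depth x <= depthL (x::X)) by (apply depth_le_L; simpl; auto).
  apply depthL_lt_iff. split; [lia|]. intros v Hv.
  destruct (H2 v Hv) as [u [Hu Hd]]. apply depth_le_L in Hu. lia.
Qed.

Ltac below_tac :=
  let v := fresh "v" in let Hv := fresh "Hv" in
  intros v Hv; dtac;
  match goal with
  | H : In (RFun ?Y ?c) _ , H2 : In v ?Y |- _ =>
      exists (RFun Y c); split; [auto|]; rewrite depth_fun; pose proof (depth_le_L _ _ H2); lia
  | H : In (RFun ?Y v) _ |- _ => exists (RFun Y v); split; [auto|]; rewrite depth_fun; lia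
  | H : In (RInl (Some v)) _ |- _ => exists (RInl (Some v)); split; [auto|]; simpl; lia
  | H : In (RInr (Some v)) _ |- _ => exists (RInr (Some v)); split; [auto|]; simpl; lia
  | H : In (?f v) _ |- _ => exists (f v); split; [auto|]; simpl; lia
  end.

Lemma con_f_fuel : forall n τ X m, depthL X < n -> depthL X < m -> (con_f n τ X <-> con_f m τ X).
Proof.
  induction n as [|n IH]; intros τ X m Hn Hm; [lia|].
  destruct m as [|m]; [lia|].
  destruct X as [|t0 X0]; [simpl; tauto|].
  assert (Hn' : depthL (t0::X0) <= n) by lia.
  assert (Hm' : depthL (t0::X0) <= m) by lia.
  assert (Hne : t0 :: X0 <> []) by congruence.
  cbn [con_f]. set (X := t0 :: X0) in *. clearbody X.
  destruct τ.
  - tauto.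
  - rewrite (IH _ (fsts X) m), (IH _ (snds X) m); try tauto;
      eapply sub_lt'; eauto; below_tac.
  -
    assert (Htok : forall t, In t X -> ((match t with RFun Y _ => con_f n τ1 Y | _ => False end) <->
                                       (match t with RFun Y _ => con_f m τ1 Y | _ => False end))).
    { intros t Ht. destruct t; try tauto. apply IH; eapply sub_lt'; eauto;
        intros v Hv; exists (RFun l t); split; auto; rewrite depth_fun;
        pose proof (depth_le_L _ _ Hv); lia. }
    assert (HI : forall I, incl I X -> (con_f n τ1 (fargs I) <-> con_f m τ1 (fargs I)) /\
                                  (con_f n τ2 (fress I) <-> con_f m τ2 (fress I))).
    { intros I Hincl. unfold incl in Hincl. split; apply IH; eapply sub_lt'; eauto; below_tac. }
    split; intros [H1 H2]; split.
    + intros t Ht. apply (proj1 (Htok t Ht)); exact (H1 t Ht).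
    + intros I HIX HA. apply (proj1 (proj2 (HI I HIX))). apply H2; auto. apply (proj2 (proj1 (HI I HIX))); auto.
    + intros t Ht. apply (proj2 (Htok t Ht)); exact (H1 t Ht).
    + intros I HIX HA. apply (proj2 (proj2 (HI I HIX))). apply H2; auto. apply (proj1 (proj1 (HI I HIX))); auto.
  - rewrite (IH _ (inls X) m), (IH _ (inrs X) m); try tauto;
      eapply sub_lt'; eauto; below_tac.
  - tauto.
  - apply IH; eapply sub_lt'; eauto; below_tac.
Qed.

Definition con (τ : ty) (X : list rtok) : Prop := con_f (S (depthL X)) τ X.

Lemma con_f_con n τ X : depthL X < n -> (con_f n τ X <-> con τ X).
Proof. intros. apply con_f_fuel; auto. Qed.

Lemma flat_map_ext_in {A B} (f g : A -> list B) l :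
  (forall x, In x l -> f x = g x) -> flat_map f l = flat_map g l.
Proof.
  induction l; simpl; intros H; auto. rewrite H by auto. f_equal. auto.
Qed.

Lemma ent_f_fuel : forall n τ X t m, depth t < n -> depthL X < n -> depth t < m -> depthL X < m ->
  (ent_f n τ X t <-> ent_f m τ X t).
Proof.
  induction n as [|n IH]; intros τ X t m H1 H2 H3 H4; [lia|].
  destruct m as [|m]; [lia|].
  assert (0 < n) by (pose proof (depth_pos t); lia).
  assert (0 < m) by (pose proof (depth_pos t); lia).
  assert (HXn : forall v, In v X -> depth v <= n) by (intros v Hv; apply depth_le_L in Hv; lia).
  assert (HXm : forall v, In v X -> depth v <= m) by (intros v Hv; apply depth_le_L in Hv; lia).
  cbn [ent_f].
  destruct τ, t; try tauto.
  - apply IH; simpl in *; try lia; apply depthL_lt_iff; split; auto; intros v Hv; dtac;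
      pose proof (HXn _ Hv); pose proof (HXm _ Hv); simpl in *; lia.
  - apply IH; simpl in *; try lia; apply depthL_lt_iff; split; auto; intros v Hv; dtac;
      pose proof (HXn _ Hv); pose proof (HXm _ Hv); simpl in *; lia.
  -
    rewrite depth_fun in *.
    assert (Heq : flat_map (fun s => match s with
                        | RFun Z d =>
                            if excluded_middle_informative (forall z, In z Z -> ent_f n τ1 l z)
                            then [d] else []
                        | _ => [] end) X =
                  flat_map (fun s => match s with
                        | RFun Z d =>
                            if excluded_middle_informative (forall z, In z Z -> ent_f m τ1 l z)
                            then [d] else []
                        | _ => [] end) X).
    { apply flat_map_ext_in. intros s Hs. destruct s; auto.
      assert (Hiff : (forall z, In z l0 -> ent_f n τ1 l z) <-> (forall z, In z l0 -> ent_f m τ1 l z)).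
      { pose proof (HXn _ Hs) as Hd1. pose proof (HXm _ Hs) as Hd2. rewrite depth_fun in Hd1, Hd2.
        split; intros Hz z Hz'; pose proof (depth_le_L _ _ Hz'); apply (IH _ _ _ m); try lia; auto. }
      destruct (excluded_middle_informative (forall z, In z l0 -> ent_f n τ1 l z));
      destruct (excluded_middle_informative (forall z, In z l0 -> ent_f m τ1 l z)); tauto. }
    rewrite Heq. apply IH; try lia.
    + apply depthL_lt_iff; split; auto. intros v Hv. apply in_flat_map in Hv.
      destruct Hv as [s [Hs Hv]]. destruct s; simpl in Hv; try tauto.
      destruct excluded_middle_informative; simpl in Hv; [|tauto]. destruct Hv as [<-|[]].
      pose proof (HXm _ Hs); pose proof (HXn _ Hs); rewrite depth_fun in *. lia.
    + apply depthL_lt_iff; split; auto. intros v Hv. apply in_flat_map in Hv.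
      destruct Hv as [s [Hs Hv]]. destruct s; simpl in Hv; try tauto.
      destruct excluded_middle_informative; simpl in Hv; [|tauto]. destruct Hv as [<-|[]].
      pose proof (HXm _ Hs); pose proof (HXn _ Hs); rewrite depth_fun in *. lia.
  - destruct o; [|tauto].
    rewrite (IH _ _ _ m); try tauto; simpl in *; try lia; apply depthL_lt_iff; split; auto; intros v Hv; dtac;
      pose proof (HXn _ Hv); pose proof (HXm _ Hv); simpl in *; lia.
  - destruct o; [|tauto].
    rewrite (IH _ _ _ m); try tauto; simpl in *; try lia; apply depthL_lt_iff; split; auto; intros v Hv; dtac;
      pose proof (HXn _ Hv); pose proof (HXm _ Hv); simpl in *; lia.
  - apply IH; simpl in *; try lia; apply depthL_lt_iff; split; auto; intros v Hv; dtac;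
      pose proof (HXn _ Hv); pose proof (HXm _ Hv); simpl in *; lia.
Qed.

Lemma con_nil τ : con τ [].
Proof. unfold con. simpl. exact I. Qed.

Definition con_step (τ : ty) (X : list rtok) : Prop :=
  match τ with
  | TOne => True
  | TProd a b => con a (fsts X) /\ con b (snds X)
  | TSum a b => X = [] \/ (Forall isInl X /\ con a (inls X)) \/ (Forall isInr X /\ con b (inrs X))
  | TArr a b => (forall t, In t X -> match t with RFun Y _ => con a Y | _ => False end) /\
                (forall I, incl I X -> con a (fargs I) -> con b (fress I))
  | TMu s => con (unfold_ty s) (folds X)
  | TVar _ => X = []
  end.

Lemma incl_nil_eq {A} (I : list A) : incl I [] -> I = [].
Proof. destruct I; auto. intros H. specialize (H a (or_introl eq_refl)). destruct H. Qed.

Lemma con_unfold τ X : con τ X <-> con_step τ X.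
Proof.
  destruct X as [|t0 X0].
  - split; intros _; [|apply con_nil]. destruct τ; simpl; auto using con_nil.
    split; [tauto|]. intros I HI _. apply incl_nil_eq in HI. subst. apply con_nil.
  - assert (Hn : depthL (t0::X0) <= depthL (t0::X0)) by lia.
    assert (Hne : t0 :: X0 <> []) by congruence.
    unfold con at 1. cbn [con_f]. set (X := t0 :: X0) in *. clearbody X.
    destruct τ; simpl.
    + tauto.
    + rewrite !con_f_con; try tauto; eapply sub_lt'; eauto; below_tac.
    + assert (Htok : forall t, In t X -> ((match t with RFun Y _ => con_f (depthL X) τ1 Y | _ => False end) <->
                                       (match t with RFun Y _ => con τ1 Y | _ => False end))).
      { intros t Ht. destruct t; try tauto. apply con_f_con; eapply sub_lt'; eauto;
          intros v Hv; exists (RFun l t); split; auto; rewrite depth_fun;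
          pose proof (depth_le_L _ _ Hv); lia. }
      assert (HI : forall I, incl I X -> (con_f (depthL X) τ1 (fargs I) <-> con τ1 (fargs I)) /\
                                  (con_f (depthL X) τ2 (fress I) <-> con τ2 (fress I))).
      { intros I Hincl. unfold incl in Hincl. split; apply con_f_con; eapply sub_lt'; eauto; below_tac. }
      split; intros [H1 H2]; split.
      * intros t Ht. apply (proj1 (Htok t Ht)); exact (H1 t Ht).
      * intros I HIX HA. apply (proj1 (proj2 (HI I HIX))). apply H2; auto. apply (proj2 (proj1 (HI I HIX))); auto.
      * intros t Ht. apply (proj2 (Htok t Ht)); exact (H1 t Ht).
      * intros I HIX HA. apply (proj2 (proj2 (HI I HIX))). apply H2; auto. apply (proj1 (proj1 (HI I HIX))); auto.
    + rewrite !con_f_con; [|eapply sub_lt'; eauto; below_tac ..]. split; [tauto|].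
      intros [H|H]; [congruence|tauto].
    + split; [tauto|congruence].
    + apply con_f_con; eapply sub_lt'; eauto; below_tac.
Qed.

Definition FM (a : ty) (X Y : list rtok) : list rtok :=
  flat_map (fun s => match s with
                     | RFun Z d => if excluded_middle_informative (forall z, In z Z -> Ent a Y z)
                                   then [d] else []
                     | _ => [] end) X.

Lemma in_FM a X Y d : In d (FM a X Y) <-> exists Z, In (RFun Z d) X /\ forall z, In z Z -> Ent a Y z.
Proof.
  unfold FM. rewrite in_flat_map. split.
  - intros [s [Hs Hd]]. destruct s; simpl in Hd; try tauto.
    destruct excluded_middle_informative; simpl in Hd; [|tauto]. destruct Hd as [<-|[]]. eauto.
  - intros [Z [HZ HZ']]. exists (RFun Z d). split; auto.
    destruct excluded_middle_informative; simpl; tauto.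
Qed.

Definition ent_step (τ : ty) (X : list rtok) (t : rtok) : Prop :=
  match τ, t with
  | TOne, RU => X <> []
  | TProd a b, RFst u => Ent a (fsts X) u
  | TProd a b, RSnd u => Ent b (snds X) u
  | TSum a b, RInl o => (exists v, In (RInl v) X) /\
        match o with None => True | Some u => Ent a (inls X) u end
  | TSum a b, RInr o => (exists v, In (RInr v) X) /\
        match o with None => True | Some u => Ent b (inrs X) u end
  | TArr a b, RFun Y c => Ent b (FM a X Y) c
  | TMu s, RFold u => Ent (unfold_ty s) (folds X) u
  | _, _ => False
  end.

Lemma ent_f_Ent n τ X t : depth t < n -> depthL X < n -> (ent_f n τ X t <-> Ent τ X t).
Proof. intros. unfold Ent. apply ent_f_fuel; lia. Qed.

Lemma ent_unfold τ X t : Ent τ X t <-> ent_step τ X t.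
Proof.
  unfold Ent at 1.
  assert (HX : forall v, In v X -> depth v <= Nat.max (depth t) (depthL X))
    by (intros v Hv; apply depth_le_L in Hv; lia).
  assert (Ht : depth t <= Nat.max (depth t) (depthL X)) by lia.
  pose proof (depth_pos t).
  set (n := Nat.max (depth t) (depthL X)) in *. clearbody n.
  cbn [ent_f].
  destruct τ, t; simpl; try tauto.
  - apply ent_f_Ent; simpl in *; try lia; apply depthL_lt_iff; split; try lia; intros v Hv; dtac;
      pose proof (HX _ Hv); simpl in *; lia.
  - apply ent_f_Ent; simpl in *; try lia; apply depthL_lt_iff; split; try lia; intros v Hv; dtac;
      pose proof (HX _ Hv); simpl in *; lia.
  - rewrite depth_fun in *.
    assert (Heq : flat_map (fun s => match s with
                        | RFun Z d =>
                            if excluded_middle_informative (forall z, In z Z -> ent_f n τ1 l z)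
                            then [d] else []
                        | _ => [] end) X = FM τ1 X l).
    { apply flat_map_ext_in. intros s Hs. destruct s; auto.
      assert (Hiff : (forall z, In z l0 -> ent_f n τ1 l z) <-> (forall z, In z l0 -> Ent τ1 l z)).
      { pose proof (HX _ Hs) as Hd1. rewrite depth_fun in Hd1.
        split; intros Hz z Hz'; pose proof (depth_le_L _ _ Hz'); apply (ent_f_Ent n); try lia; auto. }
      destruct (excluded_middle_informative (forall z, In z l0 -> ent_f n τ1 l z));
      destruct (excluded_middle_informative (forall z, In z l0 -> Ent τ1 l z)); tauto. }
    rewrite Heq. apply ent_f_Ent; try lia.
    apply depthL_lt_iff; split; try lia. intros v Hv. apply in_FM in Hv.
    destruct Hv as [Z [HZ _]]. pose proof (HX _ HZ). rewrite depth_fun in *. lia.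
  - destruct o; [|tauto].
    rewrite ent_f_Ent; try tauto; simpl in *; try lia; apply depthL_lt_iff; split; try lia; intros v Hv; dtac;
      pose proof (HX _ Hv); simpl in *; lia.
  - destruct o; [|tauto].
    rewrite ent_f_Ent; try tauto; simpl in *; try lia; apply depthL_lt_iff; split; try lia; intros v Hv; dtac;
      pose proof (HX _ Hv); simpl in *; lia.
  - apply ent_f_Ent; simpl in *; try lia; apply depthL_lt_iff; split; try lia; intros v Hv; dtac;
      pose proof (HX _ Hv); simpl in *; lia.
Qed.

Lemma incl_flat_map {A B} (f : A -> list B) X X' : incl X X' -> incl (flat_map f X) (flat_map f X').
Proof.
  intros H v Hv. apply in_flat_map in Hv. destruct Hv as [x [Hx Hv]].
  apply in_flat_map. exists x. auto.
Qed.

Lemma con_sub_n : forall n τ X X', depthL X' < n -> incl X X' -> con τ X' -> con τ X.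
Proof.
  induction n as [|n IH]; intros τ X X' Hd Hi Hc; [lia|].
  destruct X as [|x0 X0]; [apply con_nil|].
  assert (Hne : X' <> []) by (intro; subst; apply incl_nil_eq in Hi; discriminate).
  assert (Hd' : depthL X' <= n) by lia.
  rewrite con_unfold in *. set (X := x0 :: X0) in *. clearbody X.
  destruct τ; simpl in *.
  - auto.
  - destruct Hc as [H1 H2]. split; eapply IH; eauto;
      try (eapply sub_lt'; eauto; below_tac); apply incl_flat_map; auto.
  - destruct Hc as [H1 H2]. split.
    + intros t Ht. apply H1. auto.
    + intros I HI. apply H2. eapply incl_tran; eauto.
  - destruct Hc as [H|[[Hf Hc]|[Hf Hc]]]; [congruence| |].
    + right; left. split.
      * rewrite Forall_forall in *. auto.
      * eapply IH; eauto; [eapply sub_lt'; eauto; below_tac|apply incl_flat_map; auto].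
    + right; right. split.
      * rewrite Forall_forall in *. auto.
      * eapply IH; eauto; [eapply sub_lt'; eauto; below_tac|apply incl_flat_map; auto].
  - congruence.
  - eapply IH; eauto; [eapply sub_lt'; eauto; below_tac|apply incl_flat_map; auto].
Qed.

Lemma con_sub τ X X' : incl X X' -> con τ X' -> con τ X.
Proof. apply (con_sub_n (S (depthL X'))). lia. Qed.

Lemma ent_mono_n : forall n τ X X' t, depth t < n -> incl X X' -> Ent τ X t -> Ent τ X' t.
Proof.
  induction n as [|n IH]; intros τ X X' t Hd Hi He; [lia|].
  rewrite ent_unfold in *. destruct τ, t; simpl in He |- *; try tauto.
  - intro; subst. apply incl_nil_eq in Hi. auto.
  - eapply IH; [simpl in Hd; lia| apply incl_flat_map; eauto | eauto].
  - eapply IH; [simpl in Hd; lia| apply incl_flat_map; eauto | eauto].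
  - rewrite depth_fun in Hd. eapply IH; [lia| | eauto]. unfold FM. apply incl_flat_map; auto.
  - destruct He as [[v Hv] Ho]. split; [exists v; auto|].
    destruct o; auto. eapply IH; [simpl in Hd; lia| apply incl_flat_map; eauto | eauto].
  - destruct He as [[v Hv] Ho]. split; [exists v; auto|].
    destruct o; auto. eapply IH; [simpl in Hd; lia| apply incl_flat_map; eauto | eauto].
  - eapply IH; [simpl in Hd; lia| apply incl_flat_map; eauto | eauto].
Qed.

Lemma ent_mono τ X X' t : incl X X' -> Ent τ X t -> Ent τ X' t.
Proof. apply (ent_mono_n (S (depth t))). lia. Qed.

Lemma ent_refl τ t : wt τ t -> forall X, In t X -> Ent τ X t.
Proof.
  induction 1; intros X Hin; rewrite ent_unfold; simpl.
  - intro; subst; destruct Hin.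
  - apply IHwt. apply in_fsts. auto.
  - apply IHwt. apply in_snds. auto.
  - split; [exists o; auto|]. destruct o; auto. apply H0; auto. apply in_inls; auto.
  - split; [exists o; auto|]. destruct o; auto. apply H0; auto. apply in_inrs; auto.
  - apply IHwt. apply in_FM. exists Y. split; auto.
  - apply IHwt. apply in_folds. auto.
Qed.

Lemma ent_nil_n : forall n τ t, depth t < n -> ~ Ent τ [] t.
Proof.
  induction n as [|n IH]; intros τ t Hd He; [lia|].
  rewrite ent_unfold in He. destruct τ, t; simpl in He; try tauto.
  - eapply IH; [|eauto]. simpl in Hd. lia.
  - eapply IH; [|eauto]. simpl in Hd. lia.
  - eapply IH; [|eauto]. rewrite depth_fun in Hd. lia.
  - destruct He as [[v []] _].
  - destruct He as [[v []] _].
  - eapply IH; [|eauto]. simpl in Hd. lia.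
Qed.

Lemma ent_nil τ t : ~ Ent τ [] t.
Proof. apply (ent_nil_n (S (depth t))). lia. Qed.

Lemma Con_iff τ X : Con τ X <-> (forall t, In t X -> wt τ t) /\ con τ X.
Proof. reflexivity. Qed.

Lemma elem_eq {τ} (x y : elem τ) : (forall t, carrier x t <-> carrier y t) -> x = y.
Proof.
  destruct x as [x Hx], y as [y Hy]; simpl. intros H.
  assert (x = y) by (extensionality t; apply propositional_extensionality; auto).
  subst. f_equal. apply proof_irrelevance.
Qed.

Lemma ideal_Con {τ} (x : elem τ) X : (forall t, In t X -> carrier x t) -> Con τ X.
Proof. destruct x as [x [H1 H2]]; simpl; auto. Qed.

Lemma ideal_ent {τ} (x : elem τ) X t :
  (forall u, In u X -> carrier x u) -> Con τ [t] -> Ent τ X t -> carrier x t.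
Proof. destruct x as [x [H1 H2]]; simpl; eauto. Qed.

Lemma ideal_wt {τ} (x : elem τ) t : carrier x t -> wt τ t.
Proof.
  intros H. assert (Con τ [t]) as [Hw _] by (apply (ideal_Con x); intros u [<-|[]]; auto).
  apply Hw; simpl; auto.
Qed.

Lemma ideal_con {τ} (x : elem τ) X : (forall t, In t X -> carrier x t) -> con τ X.
Proof. intros H. apply (ideal_Con x X H). Qed.

Lemma Con_single {τ} (x : elem τ) t : carrier x t -> Con τ [t].
Proof. intros H. apply (ideal_Con x). intros u [<-|[]]; auto. Qed.

Lemma finite_in_directed {τ} (D : elem τ -> Prop) X : directed D ->
  (forall t, In t X -> exists d, D d /\ carrier d t) -> exists d, D d /\ forall t, In t X -> carrier d t.
Proof.
  intros [Hne Hdir]. induction X as [|a X IH]; intros H.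
  - destruct Hne as [d Hd]. exists d. split; auto. intros t [].
  - destruct IH as [d1 [Hd1 H1]]; [intros; apply H; simpl; auto|].
    destruct (H a) as [d2 [Hd2 H2]]; [simpl; auto|].
    destruct (Hdir d1 d2 Hd1 Hd2) as [d3 [Hd3 [Hl Hr]]].
    exists d3. split; auto. intros t [<-|Ht]; auto.
Qed.

Lemma lub_union {τ} (D : elem τ -> Prop) s : directed D -> is_lub D s ->
  forall t, carrier s t <-> exists d, D d /\ carrier d t.
Proof.
  intros Hdir [Hub Hleast] t. split; [|intros [d [Hd Ht]]; exact (Hub d Hd t Ht)].
  assert (Hid : is_ideal τ (fun t => exists d, D d /\ carrier d t)).
  { split.
    - intros X HX. destruct (finite_in_directed D X Hdir HX) as [d [Hd Hd']]. exact (ideal_Con d X Hd').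
    - intros X t0 HX Hc He. destruct (finite_in_directed D X Hdir HX) as [d [Hd Hd']].
      exists d. split; auto. eapply ideal_ent; eauto. }
  intros Hs. exact (Hleast (exist _ _ Hid) (fun d Hd t' Ht' => ex_intro _ d (conj Hd Ht')) t Hs).
Qed.

Lemma dir_ub {τ} (D : elem τ -> Prop) {I} (l : list I) (g : I -> elem τ) : directed D ->
  exists d, D d /\ forall k, In k l -> D (g k) -> dle (g k) d.
Proof.
  intros [Hne Hdir]. induction l as [|a l IH].
  - destruct Hne as [d Hd]. exists d. split; auto. intros k [].
  - destruct IH as [d1 [Hd1 H1]].
    destruct (classic (D (g a))) as [Ha|Ha].
    + destruct (Hdir d1 (g a) Hd1 Ha) as [d3 [Hd3 [Hl Hr]]].
      exists d3. split; auto. intros k [<-|Hk] Hk'; auto. intros t Ht. apply Hl. exact (H1 k Hk Hk' t Ht).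
    + exists d1. split; auto. intros k [<-|Hk] Hk'; auto. contradiction.
Qed.

Lemma tokmap_ideal σ τ (h : rtok -> rtok) (x : elem σ) :
  (forall X, Con σ (map h X) -> Con τ X) ->
  (forall X t, Con τ [t] -> Ent τ X t -> Con σ [h t] /\ Ent σ (map h X) (h t)) ->
  is_ideal τ (fun u => carrier x (h u)).
Proof.
  intros H1 H2. split.
  - intros X HX. apply H1. apply (ideal_Con x). intros t Ht. apply in_map_iff in Ht.
    destruct Ht as [u [<- Hu]]. auto.
  - intros X t HX Hc He. destruct (H2 X t Hc He) as [Hc' He']. eapply ideal_ent; eauto.
    intros u Hu; apply in_map_iff in Hu; destruct Hu as [v [<- Hv]]; auto.
Qed.

Lemma fsts_map_fst X : fsts (map RFst X) = X.
Proof. induction X; cbn; auto. f_equal. auto. Qed.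
Lemma snds_map_fst X : snds (map RFst X) = [].
Proof. induction X; cbn; auto. Qed.
Lemma fsts_map_snd X : fsts (map RSnd X) = [].
Proof. induction X; cbn; auto. Qed.
Lemma snds_map_snd X : snds (map RSnd X) = X.
Proof. induction X; cbn; auto. f_equal. auto. Qed.
Lemma folds_map X : folds (map RFold X) = X.
Proof. induction X; cbn; auto. f_equal. auto. Qed.
Lemma inls_map X : inls (map (fun u => RInl (Some u)) X) = X.
Proof. induction X; cbn; auto. f_equal. auto. Qed.
Lemma inrs_map X : inrs (map (fun u => RInr (Some u)) X) = X.
Proof. induction X; cbn; auto. f_equal. auto. Qed.

Lemma tm_fst_1 a b X : Con (TProd a b) (map RFst X) -> Con a X.
Proof.
  intros [Hw Hc]. split.
  - intros t Ht. specialize (Hw (RFst t) (in_map _ _ _ Ht)). inversion Hw; auto.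
  - apply con_unfold in Hc. simpl in Hc. rewrite fsts_map_fst in Hc. tauto.
Qed.
Lemma tm_fst_2 a b X t : Con a [t] -> Ent a X t -> Con (TProd a b) [RFst t] /\ Ent (TProd a b) (map RFst X) (RFst t).
Proof.
  intros [Hw Hc] He. split; [split|].
  - intros t' [<-|[]]. constructor. apply Hw. simpl; auto.
  - apply con_unfold. simpl. split; auto. apply con_nil.
  - apply ent_unfold. simpl. rewrite fsts_map_fst. auto.
Qed.
Lemma tm_snd_1 a b X : Con (TProd a b) (map RSnd X) -> Con b X.
Proof.
  intros [Hw Hc]. split.
  - intros t Ht. specialize (Hw (RSnd t) (in_map _ _ _ Ht)). inversion Hw; auto.
  - apply con_unfold in Hc. simpl in Hc. rewrite snds_map_snd in Hc. tauto.
Qed.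
Lemma tm_snd_2 a b X t : Con b [t] -> Ent b X t -> Con (TProd a b) [RSnd t] /\ Ent (TProd a b) (map RSnd X) (RSnd t).
Proof.
  intros [Hw Hc] He. split; [split|].
  - intros t' [<-|[]]. constructor. apply Hw. simpl; auto.
  - apply con_unfold. simpl. split; auto. apply con_nil.
  - apply ent_unfold. simpl. rewrite snds_map_snd. auto.
Qed.
Lemma tm_fold_1 s X : Con (TMu s) (map RFold X) -> Con (unfold_ty s) X.
Proof.
  intros [Hw Hc]. split.
  - intros t Ht. specialize (Hw (RFold t) (in_map _ _ _ Ht)). inversion Hw; auto.
  - apply con_unfold in Hc. simpl in Hc. rewrite folds_map in Hc. tauto.
Qed.
Lemma tm_fold_2 s X t : Con (unfold_ty s) [t] -> Ent (unfold_ty s) X t ->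
  Con (TMu s) [RFold t] /\ Ent (TMu s) (map RFold X) (RFold t).
Proof.
  intros [Hw Hc] He. split; [split|].
  - intros t' [<-|[]]. constructor. apply Hw. simpl; auto.
  - apply con_unfold. simpl. auto.
  - apply ent_unfold. simpl. rewrite folds_map. auto.
Qed.
Lemma tm_inl_1 a b X : Con (TSum a b) (map (fun u => RInl (Some u)) X) -> Con a X.
Proof.
  intros [Hw Hc]. split.
  - intros t Ht. specialize (Hw (RInl (Some t)) (in_map (fun u => RInl (Some u)) _ _ Ht)).
    inversion Hw; subst. auto.
  - apply con_unfold in Hc. simpl in Hc. destruct X as [|x X]; [apply con_nil|].
    destruct Hc as [Hc|[[_ Hc]|[Hf _]]]; [discriminate| rewrite inls_map in Hc; auto |].
    inversion Hf; subst. simpl in *. contradiction.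
Qed.
Lemma tm_inl_2 a b X t : Con a [t] -> Ent a X t ->
  Con (TSum a b) [RInl (Some t)] /\ Ent (TSum a b) (map (fun u => RInl (Some u)) X) (RInl (Some t)).
Proof.
  intros [Hw Hc] He. split; [split|].
  - intros t' [<-|[]]. constructor. intros u [=<-]. apply Hw. simpl; auto.
  - apply con_unfold. simpl. right; left. split; [repeat constructor|]. exact Hc.
  - apply ent_unfold. simpl. rewrite inls_map. split; auto.
    destruct X as [|x X]; [apply ent_nil in He; contradiction|]. exists (Some x). simpl; auto.
Qed.
Lemma tm_inr_1 a b X : Con (TSum a b) (map (fun u => RInr (Some u)) X) -> Con b X.
Proof.
  intros [Hw Hc]. split.
  - intros t Ht. specialize (Hw (RInr (Some t)) (in_map (fun u => RInr (Some u)) _ _ Ht)).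
    inversion Hw; subst. auto.
  - apply con_unfold in Hc. simpl in Hc. destruct X as [|x X]; [apply con_nil|].
    destruct Hc as [Hc|[[Hf _]|[_ Hc]]]; [discriminate| |rewrite inrs_map in Hc; auto].
    inversion Hf; subst. simpl in *. contradiction.
Qed.
Lemma tm_inr_2 a b X t : Con b [t] -> Ent b X t ->
  Con (TSum a b) [RInr (Some t)] /\ Ent (TSum a b) (map (fun u => RInr (Some u)) X) (RInr (Some t)).
Proof.
  intros [Hw Hc] He. split; [split|].
  - intros t' [<-|[]]. constructor. intros u [=<-]. apply Hw. simpl; auto.
  - apply con_unfold. simpl. right; right. split; [repeat constructor|]. exact Hc.
  - apply ent_unfold. simpl. rewrite inrs_map. split; auto.
    destruct X as [|x X]; [apply ent_nil in He; contradiction|]. exists (Some x). simpl; auto.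
Qed.

Definition pr1 {a b} (x : elem (TProd a b)) : elem a :=
  exist _ _ (tokmap_ideal _ _ RFst x (tm_fst_1 a b) (tm_fst_2 a b)).
Definition pr2 {a b} (x : elem (TProd a b)) : elem b :=
  exist _ _ (tokmap_ideal _ _ RSnd x (tm_snd_1 a b) (tm_snd_2 a b)).
Definition unf {s} (x : elem (TMu s)) : elem (unfold_ty s) :=
  exist _ _ (tokmap_ideal _ _ RFold x (tm_fold_1 s) (tm_fold_2 s)).
Definition prl {a b} (x : elem (TSum a b)) : elem a :=
  exist _ _ (tokmap_ideal _ _ (fun u => RInl (Some u)) x (tm_inl_1 a b) (tm_inl_2 a b)).
Definition prr {a b} (x : elem (TSum a b)) : elem b :=
  exist _ _ (tokmap_ideal _ _ (fun u => RInr (Some u)) x (tm_inr_1 a b) (tm_inr_2 a b)).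

Lemma arr_tok {a b} (f : elem (TArr a b)) Y c : carrier f (RFun Y c) ->
  (forall u, In u Y -> wt a u) /\ wt b c /\ con a Y /\ (con a Y -> con b [c]).
Proof.
  intros H. pose proof (Con_single f _ H) as [Hw Hc].
  specialize (Hw _ (or_introl eq_refl)). inversion Hw; subst.
  apply con_unfold in Hc. simpl in Hc. destruct Hc as [H1 H2].
  specialize (H1 _ (or_introl eq_refl)). simpl in H1.
  repeat split; auto. intros HY. apply (H2 [RFun Y c]); [apply incl_refl|].
  simpl. eapply con_sub; [|exact HY]. intros v Hv. apply in_app_or in Hv. destruct Hv as [|[]]; auto.
Qed.

Lemma mk_arr_con a b Y c : (forall u, In u Y -> wt a u) -> Con b [c] -> con a Y -> Con (TArr a b) [RFun Y c].
Proof.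
  intros HY [Hwc Hcc] HcY. split.
  - intros t [<-|[]]. constructor; auto. apply Hwc. simpl; auto.
  - apply con_unfold. simpl. split.
    + intros t [<-|[]]. auto.
    + intros I HI _. eapply con_sub; [|exact Hcc]. intros v Hv. apply in_fress in Hv.
      destruct Hv as [Y' HY']. apply HI in HY'. destruct HY' as [[=]|[]]. subst. simpl; auto.
Qed.

Lemma collect {a b} (f : elem (TArr a b)) (x : elem a) C :
  (forall c, In c C -> Defs.app (carrier f) (carrier x) c) ->
  exists T, (forall t, In t T -> carrier f t) /\ (forall u, In u (fargs T) -> carrier x u) /\ fress T = C.
Proof.
  induction C as [|c C IH]; intros H.
  - exists []. repeat split; auto; intros u [].
  - destruct (H c (or_introl eq_refl)) as [Y [HY Hf]].
    destruct IH as [T [H1 [H2 H3]]]; [intros; apply H; simpl; auto|].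
    exists (RFun Y c :: T). split; [|split].
    + intros t [<-|Ht]; auto.
    + change (fargs (RFun Y c :: T)) with (Y ++ fargs T). intros u Hu. apply in_app_or in Hu.
      destruct Hu; auto.
    + change (fress (RFun Y c :: T)) with (c :: fress T). congruence.
Qed.

Lemma app_ideal {a b} (f : elem (TArr a b)) (x : elem a) : is_ideal b (Defs.app (carrier f) (carrier x)).
Proof.
  split.
  - intros C HC. destruct (collect f x C HC) as [T [H1 [H2 H3]]]. split.
    + intros c Hc. destruct (HC c Hc) as [Y [_ Hf]]. apply arr_tok in Hf. tauto.
    + pose proof (ideal_con f T H1) as HT. apply con_unfold in HT. simpl in HT.
      rewrite <- H3. apply (proj2 HT); [apply incl_refl|]. apply (ideal_con x); auto.
  - intros C c HC Hc He. destruct (collect f x C HC) as [T [H1 [H2 H3]]].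
    exists (fargs T). split; auto.
    apply (ideal_ent f T); auto.
    + apply mk_arr_con; auto.
      * intros u Hu. apply (ideal_wt x). auto.
      * apply (ideal_con x); auto.
    + apply ent_unfold. simpl. eapply ent_mono; [|exact He].
      intros c' Hc'. rewrite <- H3 in Hc'. apply in_fress in Hc'. destruct Hc' as [Z HZ].
      apply in_FM. exists Z. split; auto. intros z Hz.
      assert (Hz' : In z (fargs T)) by (apply in_fargs; eauto).
      apply ent_refl; auto. apply (ideal_wt x). auto.
Qed.

Definition appE {a b} (f : elem (TArr a b)) (x : elem a) : elem b :=
  exist _ _ (app_ideal f x).

Lemma appE_mono {a b} (f f' : elem (TArr a b)) (x x' : elem a) :
  dle f f' -> dle x x' -> dle (appE f x) (appE f' x').
Proof.
  intros Hf Hx c [Y [HY HfY]]. exists Y. split; [intros u Hu; apply Hx; auto | apply Hf; auto].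
Qed.

Lemma gen_ideal {τ} (x : elem τ) X (H : forall t, In t X -> carrier x t) :
  is_ideal τ (fun t => forall z : elem τ, (forall u, In u X -> carrier z u) -> carrier z t).
Proof.
  split.
  - intros Y HY. apply (ideal_Con x). intros t Ht. apply HY; auto.
  - intros Y t HY Hc He z Hz. apply (ideal_ent z Y); auto.
Qed.

Definition gen {τ} (x : elem τ) X (H : forall t, In t X -> carrier x t) : elem τ :=
  exist _ _ (gen_ideal x X H).

Lemma gen_le {τ} (x : elem τ) X H (y : elem τ) : (forall u, In u X -> carrier y u) -> dle (gen x X H) y.
Proof. intros Hy t Ht. apply Ht. auto. Qed.

Lemma gen_in {τ} (x : elem τ) X H t : In t X -> carrier (gen x X H) t.
Proof. intros Ht z Hz. auto. Qed.

Definition Ev (P : nat -> Prop) : Prop := exists N, forall n, N <= n -> P n.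

Lemma Ev_list {A} (P : nat -> A -> Prop) X : (forall t, In t X -> Ev (fun n => P n t)) ->
  Ev (fun n => forall t, In t X -> P n t).
Proof.
  induction X as [|a X IH]; intros H.
  - exists 0. intros n _ t [].
  - destruct IH as [N1 H1]; [intros; apply H; simpl; auto|].
    destruct (H a (or_introl eq_refl)) as [N2 H2].
    exists (Nat.max N1 N2). intros n Hn t [<-|Ht]; [apply H2|apply H1]; auto; lia.
Qed.

Lemma liminf_ideal {τ} (k : nat -> elem τ) : is_ideal τ (fun t => Ev (fun n => carrier (k n) t)).
Proof.
  split.
  - intros X HX. destruct (Ev_list _ X HX) as [N HN]. apply (ideal_Con (k N)). apply HN. lia.
  - intros X t HX Hc He. destruct (Ev_list _ X HX) as [N HN]. exists N. intros n Hn.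
    apply (ideal_ent (k n) X); auto.
Qed.

Definition liminf {τ} (k : nat -> elem τ) : elem τ := exist _ _ (liminf_ideal k).

Ltac in_app_tac := let v := fresh "v" in let Hv := fresh "Hv" in intros v Hv;
  repeat match goal with H : In _ (_ ++ _) |- _ => apply in_app_or in H; destruct H end; auto.

Lemma g_shift {a b} (g : elem (TArr a b)) L L' c : carrier g (RFun L c) -> con a L -> Con a L' ->
  (forall z, In z L -> Ent a L' z) -> carrier g (RFun L' c).
Proof.
  intros Hg HL HL' Hz. pose proof (arr_tok g L c Hg) as [HwL [Hwc [_ Hcc]]].
  assert (Hc : Con b [c]) by (split; [intros t [<-|[]]; auto | apply Hcc; auto]).
  apply (ideal_ent g [RFun L c]).
  - intros u [<-|[]]; auto.
  - apply mk_arr_con; auto. apply HL'. apply HL'.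
  - apply ent_unfold. cbn [ent_step]. apply ent_refl; auto. apply in_FM. exists L. split; [left; auto|auto].
Qed.

Lemma enlarge {a b} (g : elem (TArr a b)) L L' c : carrier g (RFun L c) -> incl L L' -> Con a L' ->
  carrier g (RFun L' c).
Proof.
  intros Hg Hi HL'. apply (g_shift g L); auto.
  - eapply con_sub; eauto. apply HL'.
  - intros z Hz. apply ent_refl; auto. apply HL'. auto.
Qed.

Lemma app_gen {a b} (g : elem (TArr a b)) (x : elem a) X (HX : forall t, In t X -> carrier x t) c :
  carrier (appE g (gen x X HX)) c <-> carrier g (RFun X c).
Proof.
  set (e := gen x X HX).
  assert (Hex : forall t, carrier e t -> carrier x t) by (intros t Ht; apply Ht; auto).
  assert (HXe : forall t, In t X -> carrier e t) by (intros; apply gen_in; auto).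
  split; [|intros H; exists X; split; auto].
  intros [Y [HY Hg]].
  set (P := fun y => forall Y' c, (forall z, In z Y' -> carrier e z) ->
                 carrier g (RFun (y :: Y') c) -> carrier g (RFun (X ++ Y') c)).
  assert (Step2 : forall Z, (forall z, In z Z -> carrier e z /\ P z) ->
            forall Y' c, (forall z, In z Y' -> carrier e z) ->
            carrier g (RFun (Z ++ Y') c) -> carrier g (RFun (X ++ Y') c)).
  { induction Z as [|z Z IH]; intros HZ Y' c' HY' Hg'.
    - simpl in Hg'. apply (enlarge g Y'); auto.
      + intros v Hv; apply in_or_app; auto.
      + apply (ideal_Con e). intros v Hv. apply in_app_or in Hv. destruct Hv; auto.
    - simpl in Hg'. destruct (HZ z (or_introl eq_refl)) as [Hez Pz].
      assert (HZe : forall v, In v Z -> carrier e v) by (intros v Hv; apply HZ; simpl; auto).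
      apply Pz in Hg'.
      2:{ intros v Hv. apply in_app_or in Hv. destruct Hv; auto. }
      apply (enlarge g _ (Z ++ (X ++ Y'))) in Hg'.
      2:{ intros v Hv. repeat (apply in_app_or in Hv; destruct Hv as [Hv|Hv]); auto 10 using in_or_app. }
      2:{ apply (ideal_Con e). intros v Hv. repeat (apply in_app_or in Hv; destruct Hv as [Hv|Hv]); auto. }
      assert (HZ' : forall v, In v Z -> carrier e v /\ P v) by (intros v Hv; apply HZ; simpl; auto).
      assert (HXY : forall v, In v (X ++ Y') -> carrier e v) by in_app_tac.
      pose proof (IH HZ' (X ++ Y') c' HXY Hg') as Hg4.
      apply (enlarge g _ (X ++ Y')) in Hg4; auto.
      + intros v Hv. repeat (apply in_app_or in Hv; destruct Hv as [Hv|Hv]); auto using in_or_app.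
      + apply (ideal_Con e). auto. }
  assert (HQ : is_ideal a (fun y => carrier e y /\ P y)).
  { split.
    - intros Z HZ. apply (ideal_Con e). intros; apply HZ; auto.
    - intros Z y HZ Hc He. split.
      + apply (ideal_ent e Z); auto. intros; apply HZ; auto.
      + intros Y' c' HY' Hg'.
        assert (HZe : forall v, In v Z -> carrier e v) by (intros v Hv; apply HZ; auto).
        assert (Hy : carrier e y) by (apply (ideal_ent e Z); auto).
        assert (Hg2 : carrier g (RFun (Z ++ Y') c')).
        { apply (g_shift g (y :: Y')); auto.
          - apply (ideal_con e). intros v [<-|Hv]; auto.
          - apply (ideal_Con e). intros v Hv. apply in_app_or in Hv. destruct Hv; auto.
          - intros z [<-|Hz].
            + eapply ent_mono; [|exact He]. intros v Hv; apply in_or_app; auto.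
            + apply ent_refl; [apply (ideal_wt e); auto|]. apply in_or_app; auto. }
        apply (Step2 Z); auto. }
  set (Qel := exist _ _ HQ : elem a).
  assert (HeQ : forall t, carrier e t -> carrier e t /\ P t).
  { intros t Ht. apply (Ht Qel). intros u Hu. split; auto.
    intros Y' c' HY' Hg'. apply (enlarge g (u :: Y')); auto.
    - intros v [<-|Hv]; apply in_or_app; auto.
    - apply (ideal_Con e). intros v Hv. apply in_app_or in Hv. destruct Hv; auto. }
  assert (Hg3 : carrier g (RFun (X ++ []) c)).
  { apply (Step2 Y); auto. intros z []. rewrite app_nil_r. auto. }
  rewrite app_nil_r in Hg3. exact Hg3.
Qed.

Definition Conv {τ} (k : nat -> elem τ) (L : elem τ) : Prop :=
  forall t, (carrier L t -> Ev (fun n => carrier (k n) t)) /\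
            (~ carrier L t -> Ev (fun n => ~ carrier (k n) t)).

Definition seqclosed {τ} (K : elem τ -> Prop) : Prop :=
  forall k L, (forall n, K (k n)) -> Conv k L -> K L.

Lemma open_ext {τ} (U V : elem τ -> Prop) : (forall x, U x <-> V x) -> scott_open U -> scott_open V.
Proof.
  intros H [H1 H2]. split.
  - intros x y Hxy Hx. apply H. apply (H1 x y Hxy). apply H. auto.
  - intros D s Hd Hl Hs. destruct (H2 D s Hd Hl) as [d [Hd' Hd'']]; [apply H; auto|].
    exists d. split; auto. apply H; auto.
Qed.
Lemma seq_ext {τ} (U V : elem τ -> Prop) : (forall x, U x <-> V x) -> seqclosed U -> seqclosed V.
Proof. intros H H1 k L Hk Hc. apply H. apply (H1 k L); auto. intros n; apply H; auto. Qed.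
Lemma sat_ext {τ} (U V : elem τ -> Prop) : (forall x, U x <-> V x) -> saturated U -> saturated V.
Proof. intros H H1 x y Hxy Hx. apply H. apply (H1 x y Hxy). apply H. auto. Qed.

Lemma open_true {τ} : scott_open (fun _ : elem τ => True).
Proof. split; [intros ? ? ? ?; auto|]. intros D s Hd0 _ _. destruct Hd0 as [[d Hd] _]. exists d; auto. Qed.
Lemma open_false {τ} : scott_open (fun _ : elem τ => False).
Proof. split; [intros ? ? ? ?; auto| intros ? ? ? ? []]. Qed.
Lemma open_and {τ} (U V : elem τ -> Prop) : scott_open U -> scott_open V -> scott_open (fun x => U x /\ V x).
Proof.
  intros [U1 U2] [V1 V2]. split.
  - intros x y Hxy [Hu Hv]. split; eauto.
  - intros D s Hd Hl [Hu Hv]. destruct (U2 D s Hd Hl Hu) as [d1 [Hd1 Hu1]].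
    destruct (V2 D s Hd Hl Hv) as [d2 [Hd2 Hv2]].
    destruct (proj2 Hd d1 d2 Hd1 Hd2) as [d3 [Hd3 [Hl1 Hl2]]]. exists d3. split; [auto|split; eauto].
Qed.
Lemma open_or {τ} (U V : elem τ -> Prop) : scott_open U -> scott_open V -> scott_open (fun x => U x \/ V x).
Proof.
  intros [U1 U2] [V1 V2]. split.
  - intros x y Hxy [Hu|Hv]; eauto.
  - intros D s Hd Hl [Hu|Hv].
    + destruct (U2 D s Hd Hl Hu) as [d1 [Hd1 Hu1]]. eauto.
    + destruct (V2 D s Hd Hl Hv) as [d1 [Hd1 Hu1]]. eauto.
Qed.
Lemma open_ex {τ} {I} (U : I -> elem τ -> Prop) : (forall i, scott_open (U i)) -> scott_open (fun x => exists i, U i x).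
Proof.
  intros H. split.
  - intros x y Hxy [i Hi]. exists i. apply (proj1 (H i) x y Hxy). auto.
  - intros D s Hd Hl [i Hi]. destruct (proj2 (H i) D s Hd Hl Hi) as [d [Hd1 Hd2]]. eauto.
Qed.

Lemma seq_true {τ} : seqclosed (fun _ : elem τ => True).
Proof. intros k L _ _; auto. Qed.
Lemma seq_false {τ} : seqclosed (fun _ : elem τ => False).
Proof. intros k L Hk. destruct (Hk 0). Qed.
Lemma seq_and {τ} (U V : elem τ -> Prop) : seqclosed U -> seqclosed V -> seqclosed (fun x => U x /\ V x).
Proof. intros HU HV k L Hk Hc. split; [apply (HU k L)|apply (HV k L)]; auto; intros n; apply Hk. Qed.
Lemma seq_all {τ} {I} (U : I -> elem τ -> Prop) : (forall i, seqclosed (U i)) -> seqclosed (fun x => forall i, U i x).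
Proof. intros H k L Hk Hc i. apply (H i k L); auto. Qed.

Lemma Conv_sub {τ} (k : nat -> elem τ) L (c : nat -> nat) : (forall n, n <= c n) ->
  Conv k L -> Conv (fun n => k (c n)) L.
Proof.
  intros Hc H t. destruct (H t) as [H1 H2]. split.
  - intros Ht. destruct (H1 Ht) as [N HN]. exists N. intros n Hn. apply HN. specialize (Hc n). lia.
  - intros Ht. destruct (H2 Ht) as [N HN]. exists N. intros n Hn. apply HN. specialize (Hc n). lia.
Qed.

Lemma seq_or {τ} (U V : elem τ -> Prop) : seqclosed U -> seqclosed V -> seqclosed (fun x => U x \/ V x).
Proof.
  intros HU HV k L Hk Hc.
  destruct (classic (forall N, exists n, N <= n /\ U (k n))) as [H|H].
  - left. set (c := fun N => proj1_sig (constructive_indefinite_description _ (H N))).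
    assert (Hc1 : forall N, N <= c N /\ U (k (c N))) by (intros N; exact (proj2_sig (constructive_indefinite_description _ (H N)))).
    apply (HU (fun n => k (c n)) L).
    + intros n. apply Hc1.
    + apply Conv_sub; auto. intros n; apply Hc1.
  - right. apply not_all_ex_not in H. destruct H as [N HN].
    apply (HV (fun n => k (n + N)) L).
    + intros n. destruct (Hk (n + N)) as [Hu|Hv]; auto. exfalso. apply HN. exists (n + N). split; auto; lia.
    + apply Conv_sub; auto. intros; lia.
Qed.

Lemma sat_true {τ} : saturated (fun _ : elem τ => True).
Proof. intros x y _ _. auto. Qed.
Lemma sat_false {τ} : saturated (fun _ : elem τ => False).
Proof. intros x y _ []. Qed.
Lemma sat_and {τ} (U V : elem τ -> Prop) : saturated U -> saturated V -> saturated (fun x => U x /\ V x).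
Proof. intros HU HV x y Hxy [H1 H2]. split; eauto. Qed.
Lemma sat_or {τ} (U V : elem τ -> Prop) : saturated U -> saturated V -> saturated (fun x => U x \/ V x).
Proof. intros HU HV x y Hxy [H1|H2]; [left|right]; eauto. Qed.
Lemma sat_all {τ} {I} (U : I -> elem τ -> Prop) : (forall i, saturated (U i)) -> saturated (fun x => forall i, U i x).
Proof. intros H x y Hxy Hx i. apply (H i x y Hxy). auto. Qed.

Lemma open_preimage {σ τ} (g : elem σ -> elem τ) (U : elem τ -> Prop) :
  (forall x y, dle x y -> dle (g x) (g y)) ->
  (forall D s, directed D -> is_lub D s -> forall t, carrier (g s) t -> exists d, D d /\ carrier (g d) t) ->
  scott_open U -> scott_open (fun x => U (g x)).
Proof.
  intros Hm Hc [Hu Ho]. split.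
  - intros x y Hxy H. exact (Hu _ _ (Hm _ _ Hxy) H).
  - intros D s Hd Hl Hs.
    set (D' := fun y => exists d, D d /\ y = g d).
    assert (HD' : directed D').
    { split.
      - destruct Hd as [[d Hd0] _]. exists (g d), d; auto.
      - intros y1 y2 [d1 [H1 ->]] [d2 [H2 ->]]. destruct (proj2 Hd d1 d2 H1 H2) as [d3 [H3 [Hl1 Hl2]]].
        exists (g d3). split; [exists d3; auto| split; apply Hm; auto]. }
    assert (HL' : is_lub D' (g s)).
    { split.
      - intros y [d [Hdd ->]]. apply Hm. apply (proj1 Hl); auto.
      - intros u Hub t Ht. destruct (Hc D s Hd Hl t Ht) as [d [Hdd Ht']].
        apply (Hub (g d)); [exists d; auto| auto]. }
    destruct (Ho D' (g s) HD' HL' Hs) as [y [[d [Hdd ->]] Hy]]. exists d; auto.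
Qed.

Section TokMap.
Context {σ τ : ty} (g : elem σ -> elem τ) (h : rtok -> rtok)
        (Hg : forall x u, carrier (g x) u <-> carrier x (h u)).

Lemma tm_mono x y : dle x y -> dle (g x) (g y).
Proof. intros H u Hu. apply Hg. apply H. apply Hg. auto. Qed.

Lemma tm_open (U : elem τ -> Prop) : scott_open U -> scott_open (fun x => U (g x)).
Proof.
  apply open_preimage; [apply tm_mono|].
  intros D s Hd Hl t Ht. apply Hg in Ht. apply (lub_union D s Hd Hl) in Ht.
  destruct Ht as [d [Hdd Ht]]. exists d. split; auto. apply Hg; auto.
Qed.

Lemma tm_seq (K : elem τ -> Prop) : seqclosed K -> seqclosed (fun x => K (g x)).
Proof.
  intros HK k L Hk Hc. apply (HK (fun n => g (k n)) (g L)); auto.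
  intros u. destruct (Hc (h u)) as [H1 H2]. split.
  - intros Hu. apply Hg in Hu. destruct (H1 Hu) as [N HN]. exists N. intros n Hn. apply Hg. auto.
  - intros Hu. assert (~ carrier L (h u)) by (intro; apply Hu; apply Hg; auto).
    destruct (H2 H) as [N HN]. exists N. intros n Hn Hk'. apply (HN n Hn). apply Hg. auto.
Qed.

Lemma tm_sat (K : elem τ -> Prop) : saturated K -> saturated (fun x => K (g x)).
Proof. intros HK x y Hxy Hx. exact (HK _ _ (tm_mono _ _ Hxy) Hx). Qed.
End TokMap.

Lemma tok_open {τ} t0 : scott_open (fun x : elem τ => carrier x t0).
Proof.
  split.
  - intros x y Hxy Hx. auto.
  - intros D s Hd Hl Hs. apply (lub_union D s Hd Hl) in Hs. auto.
Qed.
Lemma tok_seq {τ} t0 : seqclosed (fun x : elem τ => carrier x t0).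
Proof.
  intros k L Hk Hc. apply NNPP. intros Hn. destruct (proj2 (Hc t0) Hn) as [N HN].
  apply (HN N); auto.
Qed.
Lemma tok_sat {τ} t0 : saturated (fun x : elem τ => carrier x t0).
Proof. intros x y Hxy Hx. auto. Qed.

Lemma open_approx {τ} (U : elem τ -> Prop) x : scott_open U -> U x ->
  exists X, (forall t, In t X -> carrier x t) /\ forall y, (forall t, In t X -> carrier y t) -> U y.
Proof.
  intros [Hu Ho] Hx.
  set (D := fun d : elem τ => exists X (HX : forall t, In t X -> carrier x t), d = gen x X HX).
  assert (Hd : directed D).
  { split.
    - exists (gen x [] (fun t (H : In t []) => match H with end)). eexists; eexists; eauto.
    - intros d1 d2 [X1 [H1 ->]] [X2 [H2 ->]].
      assert (H3 : forall t, In t (X1 ++ X2) -> carrier x t) by in_app_tac.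
      exists (gen x _ H3). split; [eexists; eexists; eauto|split].
      + apply gen_le. intros u Hu0. apply gen_in. apply in_or_app; auto.
      + apply gen_le. intros u Hu0. apply gen_in. apply in_or_app; auto. }
  assert (Hl : is_lub D x).
  { split.
    - intros d [X [HX ->]]. apply gen_le. auto.
    - intros u0 Hub t Ht.
      assert (H1 : forall t', In t' [t] -> carrier x t') by (intros t' [<-|[]]; auto).
      apply (Hub (gen x [t] H1)); [eexists; eexists; eauto|]. apply gen_in. simpl; auto. }
  destruct (Ho D x Hd Hl Hx) as [d [[X [HX ->]] Hd']].
  exists X. split; auto. intros y Hy. apply (Hu _ _ (gen_le x X HX y Hy) Hd').
Qed.

From Stdlib Require Cantor.

Lemma pair_ex : {f : nat -> nat -> nat | forall a b c d, f a b = f c d -> a = c /\ b = d}.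
Proof.
  exists (fun a b => Cantor.to_nat (a, b)). intros a b c d H.
  assert (E : (a, b) = (c, d)) by (rewrite <- (Cantor.cancel_of_to (a, b)), <- (Cantor.cancel_of_to (c, d)), H; reflexivity).
  injection E; auto.
Qed.
Definition pairn := proj1_sig pair_ex.
Lemma pairn_inj a b c d : pairn a b = pairn c d -> a = c /\ b = d.
Proof. apply (proj2_sig pair_ex). Qed.

Fixpoint enc (t : rtok) : nat :=
  match t with
  | RU => pairn 0 0
  | RFst u => pairn 1 (enc u)
  | RSnd u => pairn 2 (enc u)
  | RInl None => pairn 3 0
  | RInl (Some u) => pairn 4 (enc u)
  | RInr None => pairn 5 0
  | RInr (Some u) => pairn 6 (enc u)
  | RFun Y c => pairn 7 (pairn (enc c)
        ((fix encl (l : list rtok) : nat :=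
           match l with [] => 0 | y :: l => S (pairn (enc y) (encl l)) end) Y))
  | RFold u => pairn 8 (enc u)
  end.

Lemma enc_inj_n : forall n t t', depth t < n -> enc t = enc t' -> t = t'.
Proof.
  induction n as [|n IH]; intros t t' Hd He; [pose proof (depth_pos t); lia|].
  destruct t; destruct t'; try (destruct o); try (destruct o0);
    cbn [enc] in He; apply pairn_inj in He; destruct He as [Ht He]; try discriminate; auto.
  all: try (f_equal; apply IH; [simpl in Hd; lia| auto]; fail).
  1,2: do 2 f_equal; apply IH; [simpl in Hd; lia| auto].
  rewrite depth_fun in Hd. apply pairn_inj in He. destruct He as [H2 H1].
  f_equal; [|apply IH; [lia|auto]].
  assert (HY : forall v, In v l -> depth v < n) by (intros v Hv; apply depth_le_L in Hv; lia).
  clear H2 Hd. revert l0 H1. induction l as [|y l IHl]; intros [|y' l'] H1; try discriminate; auto.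
  injection H1; intros H1'. apply pairn_inj in H1'. destruct H1' as [H4 H3].
  f_equal; [apply IH; auto; apply HY; simpl; auto| apply IHl; auto; intros; apply HY; simpl; auto].
Qed.

Definition tok (n : nat) : rtok := epsilon (inhabits RU) (fun t => enc t = n).

Lemma tok_enc t : tok (enc t) = t.
Proof.
  unfold tok. symmetry. apply (enc_inj_n (S (depth t))); [lia|]. symmetry.
  apply (epsilon_spec (inhabits RU) (fun t' => enc t' = enc t)). eauto.
Qed.

Definition FC {τ} {I : Type} (O : I -> elem τ -> Prop) (A : elem τ -> Prop) : Prop :=
  exists l : list I, forall x, A x -> exists k, In k l /\ O k x.

Fixpoint chain {τ} {I : Type} (O : I -> elem τ -> Prop) (K : elem τ -> Prop) (n : nat) : elem τ -> Prop :=
  match n with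
  | 0 => K
  | S j => if excluded_middle_informative (FC O (fun x => chain O K j x /\ carrier x (tok j)))
           then (fun x => chain O K j x /\ ~ carrier x (tok j))
           else (fun x => chain O K j x /\ carrier x (tok j))
  end.

Lemma compact_of_seqclosed {τ} (K : elem τ -> Prop) : seqclosed K -> compact K.
Proof.
  intros HK I O Hop Hcov. apply NNPP. intros Hn.
  set (A := chain O K).
  assert (HA : forall n, ~ FC O (A n)).
  { induction n as [|n IH]; [exact Hn|]. unfold A; cbn [chain]; fold A.
    destruct excluded_middle_informative as [Hf|Hf]; auto.
    intros [l2 Hl2]. destruct Hf as [l1 Hl1]. apply IH. exists (l1 ++ l2). intros x Hx.
    destruct (classic (carrier x (tok n))) as [Hc|Hc].
    - destruct (Hl1 x) as [k [Hk Hk']]; auto. exists k; split; auto; apply in_or_app; auto.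
    - destruct (Hl2 x) as [k [Hk Hk']]; auto. exists k; split; auto; apply in_or_app; auto. }
  assert (Hdec : forall j x, A (S j) x -> A j x).
  { intros j x. unfold A; cbn [chain]; fold A. destruct excluded_middle_informative; tauto. }
  assert (Hmono : forall j n, j <= n -> forall x, A n x -> A j x).
  { intros j n0 Hjn. induction Hjn; auto. }
  assert (Hside : forall j, (forall x, A (S j) x -> carrier x (tok j)) \/
                            (forall x, A (S j) x -> ~ carrier x (tok j))).
  { intros j. unfold A; cbn [chain]; fold A. destruct excluded_middle_informative; [right|left]; tauto. }
  assert (Hne : forall n, exists x, A n x).
  { intros n. apply NNPP. intros H. apply (HA n). exists []. intros x Hx. exfalso. apply H. eauto. }
  set (k := fun n => proj1_sig (constructive_indefinite_description _ (Hne n))).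
  assert (Hk : forall n, A n (k n)) by (intros n; exact (proj2_sig (constructive_indefinite_description _ (Hne n)))).
  assert (HkK : forall n, K (k n)) by (intros n; apply (Hmono 0 n); [lia|auto]).
  set (L := liminf k).
  assert (Hconv : Conv k L).
  { intros t. split; [intros H; exact H|]. intros Hnot.
    destruct (Hside (enc t)) as [Hin|Hout].
    - exfalso. apply Hnot. exists (S (enc t)). intros n Hn0. rewrite <- (tok_enc t). apply Hin.
      apply (Hmono (S (enc t)) n Hn0). apply Hk.
    - exists (S (enc t)). intros n Hn0 Hc. rewrite <- (tok_enc t) in Hc. apply (Hout (k n)); auto.
      apply (Hmono (S (enc t)) n Hn0). apply Hk. }
  assert (KL : K L) by (apply (HK k L); auto).
  destruct (Hcov L KL) as [i Hi].
  destruct (open_approx (O i) L (Hop i) Hi) as [X [HX HXO]].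
  assert (Ht1 : forall t, In t X -> exists M, forall x, A M x -> carrier x t).
  { intros t Ht. destruct (HX t Ht) as [N HN].
    destruct (Hside (enc t)) as [Hin|Hout].
    - exists (S (enc t)). intros x Hx. rewrite <- (tok_enc t). auto.
    - exfalso. apply (Hout (k (Nat.max N (S (enc t))))).
      + apply (Hmono _ _ (Nat.le_max_r N _)). apply Hk.
      + rewrite tok_enc. apply HN. lia. }
  assert (HM : exists M, forall t, In t X -> forall x, A M x -> carrier x t).
  { clear HX HXO Hi. induction X as [|t X IH].
    - exists 0. intros t [].
    - destruct IH as [M1 H1]; [intros; apply Ht1; simpl; auto|].
      destruct (Ht1 t (or_introl eq_refl)) as [M2 H2].
      exists (Nat.max M1 M2). intros t' [<-|Ht'] x Hx.
      + apply H2. apply (Hmono _ _ (Nat.le_max_r M1 M2)); auto.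
      + apply (H1 t' Ht'). apply (Hmono _ _ (Nat.le_max_l M1 M2)); auto. }
  destruct HM as [M HM]. apply (HA M). exists [i]. intros x Hx. exists i. split; [simpl; auto|].
  apply HXO. intros t Ht. apply (HM t Ht x Hx).
Qed.

Lemma dle_refl {τ} (x : elem τ) : dle x x.
Proof. intros t H; exact H. Qed.

Lemma imp_open {a b} (K : elem a -> Prop) (V : elem b -> Prop) : compact K -> scott_open V ->
  scott_open (fun f : elem (TArr a b) => forall x, K x -> V (appE f x)).
Proof.
  intros HK HV. pose proof HV as [Vu Vo]. split.
  - intros f f' Hff Hf x Hx. apply (Vu (appE f x)); [apply appE_mono; auto; apply dle_refl | auto].
  - intros D s Hd Hl Hs.
    assert (Hx1 : forall x, K x -> exists d, D d /\ V (appE d x)).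
    { intros x Hx.
      assert (Ho : scott_open (fun d : elem (TArr a b) => V (appE d x))).
      { apply open_preimage; auto.
        - intros f f' H. apply appE_mono; auto. apply dle_refl.
        - intros D' s' Hd' Hl' c [Y [HY Hs']]. apply (lub_union D' s' Hd' Hl') in Hs'.
          destruct Hs' as [d [HD Hd2]]. exists d. split; auto. exists Y; auto. }
      apply (proj2 Ho D s Hd Hl). auto. }
    set (O := fun (d : elem (TArr a b)) (x : elem a) => D d /\ V (appE d x)).
    assert (HO : forall d, scott_open (O d)).
    { intros d. split.
      - intros x y Hxy [HD Hv]. split; auto. apply (Vu (appE d x)); auto. apply appE_mono; auto; apply dle_refl.
      - intros D' s' Hd' Hl' [HD Hv].
        assert (Ho : scott_open (fun x => V (appE d x))).
        { apply open_preimage; auto.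
          - intros x y H. apply appE_mono; auto. apply dle_refl.
          - intros D2 s2 Hd2 Hl2 c [Y [HY Hs2]].
            destruct (finite_in_directed D2 Y Hd2) as [x' [Hx' HYx']].
            + intros u Hu. apply (lub_union D2 s2 Hd2 Hl2). auto.
            + exists x'. split; auto. exists Y; auto. }
        destruct (proj2 Ho D' s' Hd' Hl' Hv) as [x' [Hx' Hv']]. exists x'. split; auto. split; auto. }
    destruct (HK _ O HO Hx1) as [l Hl'].
    destruct (dir_ub D l (fun k => k) Hd) as [d [HDd Hub]].
    exists d. split; auto. intros x Hx. destruct (Hl' x Hx) as [k [Hk [HDk Hv]]].
    apply (Vu (appE k x)); auto. apply appE_mono; [apply Hub; auto| apply dle_refl].
Qed.

Lemma imp_seq {a b} (U : elem a -> Prop) (K : elem b -> Prop) : scott_open U -> seqclosed K -> saturated K ->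
  seqclosed (fun f : elem (TArr a b) => forall x, U x -> K (appE f x)).
Proof.
  intros HU HK HKs k L Hk Hc x Hx.
  destruct (open_approx U x HU Hx) as [X [HX HXU]].
  set (e := gen x X HX).
  assert (Ue : U e) by (apply HXU; intros; apply gen_in; auto).
  assert (Ke : K (appE L e)).
  { apply (tm_seq (fun f => appE f e) (fun c => RFun X c) (fun f c => app_gen f x X HX c) K HK k L); auto.
  }
  apply (HKs (appE L e)); auto. apply appE_mono; [apply dle_refl|]. apply gen_le. auto.
Qed.

Lemma imp_sat {a b} (U : elem a -> Prop) (K : elem b -> Prop) : saturated K ->
  saturated (fun f : elem (TArr a b) => forall x, U x -> K (appE f x)).
Proof.
  intros HK f f' Hff Hf x Hx. apply (HK (appE f x)); auto. apply appE_mono; auto. apply dle_refl.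
Qed.

Lemma sem_imp_iff {a b} (f : elem (TArr a b)) (A : elem a -> Prop) (B : elem b -> Prop) :
  (forall x, A x -> exists y : elem b, (forall d, carrier y d <-> Defs.app (carrier f) (carrier x) d) /\ B y)
  <-> (forall x, A x -> B (appE f x)).
Proof.
  split.
  - intros H x Hx. destruct (H x Hx) as [y [Hy HB]].
    replace (appE f x) with y; auto. apply elem_eq. intros d. rewrite Hy. reflexivity.
  - intros H x Hx. exists (appE f x). split; [reflexivity|auto].
Qed.

Definition Psig (s : sign) {τ} (K : elem τ -> Prop) : Prop :=
  match s with
  | SPlus => scott_open K
  | SMinus => seqclosed K /\ saturated K
  | SPM => scott_open K /\ seqclosed K
  end.

Lemma Psig_ext s {τ} (U V : elem τ -> Prop) : (forall x, U x <-> V x) -> Psig s U -> Psig s V.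
Proof.
  intros H. destruct s; simpl.
  - intros [H1 H2]. split; [eapply open_ext|eapply seq_ext]; eauto.
  - apply open_ext; auto.
  - intros [H1 H2]. split; [eapply seq_ext|eapply sat_ext]; eauto.
Qed.
Lemma Psig_true s {τ} : Psig s (fun _ : elem τ => True).
Proof. destruct s; simpl; auto using open_true, seq_true, sat_true. Qed.
Lemma Psig_false s {τ} : Psig s (fun _ : elem τ => False).
Proof. destruct s; simpl; auto using open_false, seq_false, sat_false. Qed.
Lemma Psig_and s {τ} (U V : elem τ -> Prop) : Psig s U -> Psig s V -> Psig s (fun x => U x /\ V x).
Proof. destruct s; simpl; intuition auto using open_and, seq_and, sat_and. Qed.
Lemma Psig_or s {τ} (U V : elem τ -> Prop) : Psig s U -> Psig s V -> Psig s (fun x => U x \/ V x).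
Proof. destruct s; simpl; intuition auto using open_or, seq_or, sat_or. Qed.
Lemma Psig_tok s {τ} t0 : Psig s (fun x : elem τ => carrier x t0).
Proof. destruct s; simpl; auto using tok_open, tok_seq, tok_sat. Qed.
Lemma Psig_tm s {σ τ} (g : elem σ -> elem τ) (h : rtok -> rtok)
  (Hg : forall x u, carrier (g x) u <-> carrier x (h u)) (K : elem τ -> Prop) :
  Psig s K -> Psig s (fun x => K (g x)).
Proof.
  destruct s; simpl; intros.
  - destruct H; split; [apply (tm_open g h Hg)|apply (tm_seq g h Hg)]; auto.
  - apply (tm_open g h Hg); auto.
  - destruct H; split; [apply (tm_seq g h Hg)|apply (tm_sat g h Hg)]; auto.
Qed.
Lemma Psig_iter s {τ} (F : (elem τ -> Prop) -> (elem τ -> Prop)) base n :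
  Psig s base -> (forall S, Psig s S -> Psig s (F S)) -> Psig s (Nat.iter n F base).
Proof. intros H1 H2. induction n; simpl; auto. Qed.

Lemma tm_exist_iff {σ τ} (g : elem σ -> elem τ) (h : rtok -> rtok)
  (Hg : forall x u, carrier (g x) u <-> carrier x (h u)) (K : elem τ -> Prop) x :
  (exists y, (forall u, carrier y u <-> carrier x (h u)) /\ K y) <-> K (g x).
Proof.
  split.
  - intros [y [Hy HK]]. replace (g x) with y; auto. apply elem_eq. intros u. rewrite Hy, Hg. reflexivity.
  - intros HK. exists (g x). split; auto.
Qed.

Lemma sum_tag_l {a b} (x : elem (TSum a b)) u : carrier x (RInl None) -> carrier x u -> isInl u.
Proof.
  intros H1 H2. assert (Hc : con (TSum a b) [RInl None; u]) by (apply (ideal_con x); intros t [<-|[<-|[]]]; auto).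
  apply con_unfold in Hc. simpl in Hc. destruct Hc as [Hc|[[Hf _]|[Hf _]]]; [discriminate| |].
  - inversion Hf; subst. inversion H4; subst. auto.
  - inversion Hf; subst. simpl in H3. contradiction.
Qed.
Lemma sum_tag_r {a b} (x : elem (TSum a b)) u : carrier x (RInr None) -> carrier x u -> isInr u.
Proof.
  intros H1 H2. assert (Hc : con (TSum a b) [RInr None; u]) by (apply (ideal_con x); intros t [<-|[<-|[]]]; auto).
  apply con_unfold in Hc. simpl in Hc. destruct Hc as [Hc|[[Hf _]|[Hf _]]]; [discriminate| |].
  - inversion Hf; subst. simpl in H3. contradiction.
  - inversion Hf; subst. inversion H4; subst. auto.
Qed.

Lemma inj_iff_l {a b} (x : elem (TSum a b)) (K : elem a -> Prop) :
  (exists y, K y /\ forall u, carrier x u <-> injL (carrier y) u) <-> (carrier x (RInl None) /\ K (prl x)).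
Proof.
  split.
  - intros [y [Ky Hy]]. split; [apply Hy; simpl; auto|].
    replace (prl x) with y; auto. apply elem_eq. intros u. simpl. rewrite Hy. reflexivity.
  - intros [H1 H2]. exists (prl x). split; auto. intros u.
    destruct u; try (split; [intros Hu; apply (sum_tag_l x) in Hu; auto; contradiction | simpl; tauto]).
    destruct o; simpl; [reflexivity| tauto].
Qed.
Lemma inj_iff_r {a b} (x : elem (TSum a b)) (K : elem b -> Prop) :
  (exists y, K y /\ forall u, carrier x u <-> injR (carrier y) u) <-> (carrier x (RInr None) /\ K (prr x)).
Proof.
  split.
  - intros [y [Ky Hy]]. split; [apply Hy; simpl; auto|].
    replace (prr x) with y; auto. apply elem_eq. intros u. simpl. rewrite Hy. reflexivity.
  - intros [H1 H2]. exists (prr x). split; auto. intros u.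
    destruct u; try (split; [intros Hu; apply (sum_tag_r x) in Hu; auto; contradiction | simpl; tauto]).
    destruct o; simpl; [reflexivity| tauto].
Qed.

Definition Inv (s : sign) (Θ : fctx) (ρX : fixval) : Prop :=
  forall X σ, In (X, σ) Θ -> Psig s (ρX X σ).

Lemma Inv_upd s Θ ρX X τ S : Inv s Θ ρX -> ~ In X (map fst Θ) -> Psig s S ->
  Inv s (Θ ++ [(X, τ)]) (upd ρX X τ S).
Proof.
  intros HI HX HS Y σ Hin. apply in_app_or in Hin. destruct Hin as [Hin|[Hin|[]]].
  - assert (Y <> X) by (intro; subst; apply HX; apply (in_map fst) in Hin; exact Hin).
    unfold upd. rewrite (proj2 (Nat.eqb_neq Y X) H). apply HI; auto.
  - injection Hin; intros; subst. unfold upd. rewrite Nat.eqb_refl.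
    destruct (ty_eq_dec σ σ) as [e|n]; [|contradiction].
    rewrite (UIP_dec ty_eq_dec e eq_refl). exact HS.
Qed.

Lemma main_inv : forall s Θ τ φ, wf s Θ τ φ -> forall ρX ρi, Inv s Θ ρX -> Psig s (sem φ τ ρX ρi).
Proof.
  induction 1; intros ρX ρi HI; cbn [sem].
  - apply Psig_true.
  - apply Psig_false.
  - apply Psig_and; auto.
  - apply Psig_or; auto.
  - apply Psig_tok.
  - apply (Psig_ext s (fun x => sem a t1 ρX ρi (pr1 x))); [intros x; symmetry; apply (tm_exist_iff pr1 RFst (fun _ _ => iff_refl _))|].
    apply (Psig_tm s pr1 RFst (fun _ _ => iff_refl _)). auto.
  - apply (Psig_ext s (fun x => sem a t2 ρX ρi (pr2 x))); [intros x; symmetry; apply (tm_exist_iff pr2 RSnd (fun _ _ => iff_refl _))|].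
    apply (Psig_tm s pr2 RSnd (fun _ _ => iff_refl _)). auto.
  - apply (Psig_ext s (fun x => carrier x (RInl None) /\ sem a t1 ρX ρi (prl x))); [intros x; symmetry; apply inj_iff_l|].
    apply Psig_and; [apply Psig_tok|].
    apply (Psig_tm s prl (fun u => RInl (Some u)) (fun _ _ => iff_refl _)). auto.
  - apply (Psig_ext s (fun x => carrier x (RInr None) /\ sem a t2 ρX ρi (prr x))); [intros x; symmetry; apply inj_iff_r|].
    apply Psig_and; [apply Psig_tok|].
    apply (Psig_tm s prr (fun u => RInr (Some u)) (fun _ _ => iff_refl _)). auto.
  - apply (Psig_ext s (fun x => sem a (unfold_ty t) ρX ρi (unf x))); [intros x; symmetry; apply (tm_exist_iff unf RFold (fun _ _ => iff_refl _))|].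
    apply (Psig_tm s unf RFold (fun _ _ => iff_refl _)). auto.
  - apply HI. auto.
  - apply IHwf. intros Z σ' Hin. apply HI. apply in_or_app. auto.
  - apply Psig_iter; [apply Psig_false|]. intros S HS. apply IHwf. apply Inv_upd; auto.
  - apply Psig_iter; [apply Psig_true|]. intros S HS. apply IHwf. apply Inv_upd; auto.
  - simpl. apply open_ex. intros m. apply (IHwf ρX (iupd ρi i m)). auto.
  - simpl. split; [apply seq_all|apply sat_all]; intros m; apply (IHwf ρX (iupd ρi i m)); auto.
  - apply (Psig_ext s (fun f => forall x, sem a σ ρX ρi x -> sem b τ ρX ρi (appE f x))); [intros x; symmetry; apply sem_imp_iff|].
    assert (Ha : Psig (negs s) (sem a σ ρX ρi)) by (apply IHwf1; intros ? ? []).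
    assert (Hb : Psig s (sem b τ ρX ρi)) by (apply IHwf2; intros ? ? []).
    destruct s; simpl in Ha, Hb |- *.
    + split.
      * apply imp_open; [apply compact_of_seqclosed; tauto| tauto].
      * apply imp_seq; [tauto|tauto|]. apply (proj1 (proj1 Hb)).
    + apply imp_open; [apply compact_of_seqclosed; tauto| tauto].
    + split; [apply imp_seq; tauto| apply imp_sat; tauto].
Qed.

Theorem proposition5p4 (τ : ty) (ρ : nat -> nat) (φ : form) :
  pure_type τ ->
  (wf SPlus nil τ φ -> scott_open (sem φ τ fixval0 ρ)) /\
  (wf SMinus nil τ φ -> compact (sem φ τ fixval0 ρ) /\ saturated (sem φ τ fixval0 ρ)) /\
  (wf SPM nil τ φ -> compact (sem φ τ fixval0 ρ) /\ scott_open (sem φ τ fixval0 ρ)).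
Proof.
  intros _.
  assert (HI : forall s, Inv s [] fixval0) by (intros s X σ []).
  split; [|split]; intros H.
  - exact (main_inv _ _ _ _ H fixval0 ρ (HI _)).
  - destruct (main_inv _ _ _ _ H fixval0 ρ (HI _)) as [H1 H2]. split; auto.
    apply compact_of_seqclosed; auto.
  - destruct (main_inv _ _ _ _ H fixval0 ρ (HI _)) as [H1 H2]. split; auto.
    apply compact_of_seqclosed; auto.
Qed.
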